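(* Let $\lambda\in\mathbb{R}$ and let $f(\zeta,u)$ be a complex function on a connected open set $U\subset\mathbb{C}_\zeta\times\mathbb{R}_u$, jointly smooth and holomorphic in $\zeta$, with $f_{,\zeta\zeta}\neq0$ and $f_{,\zeta\zeta\zeta}\neq0$ on $U$. Put $\phi=(\ln f_{,\zeta\zeta})_{,\zeta}$ and $\psi=(\ln f_{,\zeta\zeta})_{,u}$. Then $$\left(\frac{\psi}{\phi}\right)_{,\zeta}=i\lambda\left[\left(\frac{2}{\phi}\right)_{,\zeta}+1\right]\quad\text{on }U$$ if and only if, near every point of $U$, $$f(\zeta,u)=\mathrm{f}\big(\zeta e^{i\lambda u}-h(u)\big)+A_1(u)\zeta+A_0(u)$$ for some holomorphic function $\mathrm{f}$ of one complex variable with $\mathrm{f}'''\neq0$ and smooth complex functions $h,A_1,A_0$ of $u$.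
   Context: Subscripts after a comma denote partial derivatives; $\zeta$ is a complex variable and $u$ a real variable; primes denote derivatives of $\mathrm{f}$ with respect to its argument. *)

(* Defs.v *)
From Stdlib Require Import Reals List.
From Coquelicot Require Import Coquelicot.
Open Scope R_scope.

Definition pt : Type := (C * R)%type.

Definition open_pt (U : pt -> Prop) : Prop :=
  forall p, U p -> exists e : posreal, forall (z : C) (u : R),
    Cmod (z - fst p)%C < e -> Rabs (u - snd p) < e -> U (z, u).

Definition connected_pt (U : pt -> Prop) : Prop :=
  forall V W : pt -> Prop, open_pt V -> open_pt W ->
    (forall p, U p -> V p \/ W p) ->
    (forall p, U p -> V p -> W p -> False) ->
    (exists p, U p /\ V p) -> (exists p, U p /\ W p) -> False.

Definition open_C (D : C -> Prop) : Prop :=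
  forall z, D z -> exists e : posreal, forall w, Cmod (w - z)%C < e -> D w.

Definition open_R (I : R -> Prop) : Prop :=
  forall t, I t -> exists e : posreal, forall s, Rabs (s - t) < e -> I s.

Definition continuous_pt (g : pt -> C) (p : pt) : Prop :=
  forall e : posreal, exists d : posreal, forall q : pt,
    Cmod (fst q - fst p)%C < d -> Rabs (snd q - snd p) < d ->
    Cmod (g q - g p)%C < e.

Definition dshift (p v : pt) (t : R) : pt :=
  ((fst p + RtoC t * fst v)%C, snd p + t * snd v).

Definition dirD (v : pt) (g : pt -> C) (p : pt) : C :=
  (Derive (fun t => Re (g (dshift p v t))) 0,
   Derive (fun t => Im (g (dshift p v t))) 0).

Definition dirD_ex (v : pt) (g : pt -> C) (p : pt) : Prop :=
  ex_derive (fun t => Re (g (dshift p v t))) 0 /\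
  ex_derive (fun t => Im (g (dshift p v t))) 0.

Fixpoint iterD (vs : list pt) (g : pt -> C) : pt -> C :=
  match vs with
  | nil => g
  | v :: vs' => dirD v (iterD vs' g)
  end.

(* Joint smoothness (C^infinity in the three real variables Re z, Im z, u)
   on U: all iterated directional derivatives exist and are continuous. *)
Definition smooth_on (U : pt -> Prop) (g : pt -> C) : Prop :=
  forall vs : list pt,
    (forall p, U p -> continuous_pt (iterD vs g) p) /\
    (forall v p, U p -> dirD_ex v (iterD vs g) p).

Definition C_diff (F : C -> C) (z : C) : Prop :=
  @ex_derive C_AbsRing C_NormedModule F z.

Definition holo_in_zeta_on (U : pt -> Prop) (g : pt -> C) : Prop :=
  forall p, U p -> C_diff (fun w => g (w, snd p)) (fst p).

Definition Dz (g : pt -> C) (p : pt) : C := C_derive (fun w => g (w, snd p)) (fst p).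
Definition Du (g : pt -> C) (p : pt) : C := dirD (RtoC 0, 1) g p.

(* phi = (ln f_{,zz})_{,z} = f_{,zzz} / f_{,zz},  psi = (ln f_{,zz})_{,u} = f_{,zzu} / f_{,zz} *)
Definition phi_of (f : pt -> C) (p : pt) : C := (Dz (Dz (Dz f)) p / Dz (Dz f) p)%C.
Definition psi_of (f : pt -> C) (p : pt) : C := (Du (Dz (Dz f)) p / Dz (Dz f) p)%C.

Definition derC (a : R -> C) (t : R) : C :=
  (Derive (fun s => Re (a s)) t, Derive (fun s => Im (a s)) t).

Definition smooth_R_on (I : R -> Prop) (a : R -> C) : Prop :=
  forall (n : nat) (t : R), I t ->
    ex_derive (fun s => Re (Nat.iter n derC a s)) t /\
    ex_derive (fun s => Im (Nat.iter n derC a s)) t.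

Definition cexpi (x : R) : C := (cos x, sin x).

(* Main.v *)
Require Import Defs.
From Stdlib Require Import Reals Lra Lia List Arith.
From Coquelicot Require Import Coquelicot.
Open Scope R_scope.

Definition cdiff (G : C -> C) (z l : C) : Prop :=
  forall eps : posreal, exists d : posreal, forall k : C,
    Cmod k < d -> Cmod (G (z + k) - G z - l * k)%C <= eps * Cmod k.

Lemma cdiff_is_derive G z l : cdiff G z l -> @is_derive C_AbsRing C_NormedModule G z l.
Proof.
  intros H. split. apply is_linear_scal_l.
  intros x Hx. apply (@is_filter_lim_locally_unique C_AbsRing (AbsRing_NormedModule C_AbsRing)) in Hx. subst x.
  intros eps. destruct (H eps) as [d Hd].
  exists d. intros y Hy.
  change (Cmod (G y - G z - (y - z) * l)%C <= eps * Cmod (y - z)%C).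
  replace y with (z + (y - z))%C at 1 by ring.
  replace ((y - z) * l)%C with (l * (y - z))%C by ring.
  apply Hd. exact Hy.
Qed.

Lemma is_derive_cdiff G z l : @is_derive C_AbsRing C_NormedModule G z l -> cdiff G z l.
Proof.
  intros [_ H] eps. specialize (H z (fun P HP => HP) eps).
  destruct H as [d Hd]. exists d. intros k Hk.
  assert (E : (z + k - z)%C = k) by ring.
  assert (Hb: ball z d (z+k)%C) by (change (Cmod (z+k-z)%C < d); rewrite E; exact Hk).
  specialize (Hd (z + k)%C Hb).
  change (Cmod (G (z+k) - G z - (z + k - z) * l)%C <= eps * Cmod (z + k - z)%C) in Hd.
  rewrite E in Hd. replace (l * k)%C with (k * l)%C by ring. apply Hd.
Qed.

Lemma C_diff_cdiff F z : C_diff F z -> cdiff F z (C_derive F z).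
Proof. intros H. apply is_derive_cdiff. apply C_derive_correct; auto. Qed.

Lemma cdiff_C_derive F z l : cdiff F z l -> C_derive F z = l.
Proof. intros H. apply is_C_derive_unique. apply cdiff_is_derive; auto. Qed.

Lemma cdiff_C_diff F z l : cdiff F z l -> C_diff F z.
Proof. intros H. exists l. apply cdiff_is_derive; auto. Qed.

Lemma Cmod_le_sum (z : C) : Cmod z <= Rabs (Re z) + Rabs (Im z).
Proof.
  destruct z as [a b]. unfold Cmod; simpl.
  pose proof (Rabs_pos a); pose proof (Rabs_pos b).
  rewrite <- (sqrt_Rsqr (Rabs a + Rabs b)) by lra.
  apply sqrt_le_1_alt. unfold Rsqr.
  assert (a^2 = Rabs a * Rabs a) by (rewrite <- Rabs_mult; rewrite Rabs_right; nra).
  assert (b^2 = Rabs b * Rabs b) by (rewrite <- Rabs_mult; rewrite Rabs_right; nra).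
  nra.
Qed.

Lemma Re_le_Cmod (z : C) : Rabs (Re z) <= Cmod z.
Proof. apply re_le_Cmod. Qed.
Lemma Im_le_Cmod (z : C) : Rabs (Im z) <= Cmod z.
Proof.
  destruct z as [a b]. unfold Cmod; simpl.
  rewrite <- sqrt_Rsqr_abs. apply sqrt_le_1_alt. unfold Rsqr. nra.
Qed.

Definition isdC (a : R -> C) (t : R) (l : C) : Prop :=
  is_derive (fun s => Re (a s)) t (Re l) /\ is_derive (fun s => Im (a s)) t (Im l).

Definition rdiffC (a : R -> C) (t : R) (l : C) : Prop :=
  forall eps : posreal, exists d : posreal, forall s : R,
    Rabs s < d -> Cmod (a (t + s)%R - a t - RtoC s * l)%C <= eps * Rabs s.

Lemma is_derive_eps (f : R -> R) t l : is_derive f t l <->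
  (forall eps : posreal, exists d : posreal, forall s : R,
    Rabs s < d -> Rabs (f (t + s) - f t - s * l) <= eps * Rabs s).
Proof.
  rewrite is_derive_Reals. split.
  - intros H eps. destruct (H eps (cond_pos eps)) as [d Hd]. exists d. intros s Hs.
    destruct (Req_dec s 0) as [->|Hs0].
    { rewrite Rplus_0_r. replace (f t - f t - 0 * l) with 0 by ring. rewrite Rabs_R0. rewrite ?Rabs_R0. lra. }
    specialize (Hd s Hs0 Hs).
    replace (f (t + s) - f t - s * l) with (s * ((f (t + s) - f t) / s - l)) by (field; auto).
    rewrite Rabs_mult. rewrite Rmult_comm. apply Rmult_le_compat_r. apply Rabs_pos. lra.
  - intros H eps Heps. destruct (H (mkposreal (eps/2) ltac:(lra))) as [d Hd]. exists d.
    intros s Hs0 Hs. specialize (Hd s Hs). simpl in Hd.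
    replace ((f (t + s) - f t) / s - l) with ((f (t + s) - f t - s * l) / s) by (field; auto).
    unfold Rdiv. rewrite Rabs_mult, Rabs_inv.
    apply Rle_lt_trans with (eps / 2 * Rabs s * / Rabs s).
    apply Rmult_le_compat_r. left. apply Rinv_0_lt_compat. apply Rabs_pos_lt; auto. auto.
    field_simplify. lra. apply Rabs_no_R0; auto.
Qed.

Lemma Cmod_comp_bound (A B L : C) s e :
  Rabs (Re A - Re B - s * Re L) <= e / 2 * Rabs s ->
  Rabs (Im A - Im B - s * Im L) <= e / 2 * Rabs s ->
  Cmod (A - B - RtoC s * L)%C <= e * Rabs s.
Proof.
  intros H1 H2. eapply Rle_trans. apply Cmod_le_sum.
  destruct A, B, L. simpl in *.
  replace (r + - r1 + - (s * r3 - 0 * r4)) with (r - r1 - s * r3) by ring.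
  replace (r0 + - r2 + - (s * r4 + 0 * r3)) with (r0 - r2 - s * r4) by ring. lra.
Qed.

Lemma isdC_rdiffC a t l : isdC a t l <-> rdiffC a t l.
Proof.
  unfold isdC. rewrite !is_derive_eps. split.
  - intros [H1 H2] eps.
    destruct (H1 (mkposreal (eps/2) ltac:(destruct eps; simpl; lra))) as [d1 Hd1].
    destruct (H2 (mkposreal (eps/2) ltac:(destruct eps; simpl; lra))) as [d2 Hd2].
    exists (mkposreal _ (Rmin_pos _ _ (cond_pos d1) (cond_pos d2))). simpl. intros s Hs.
    apply Cmod_comp_bound.
    apply (Hd1 s ltac:(eapply Rlt_le_trans; [apply Hs| apply Rmin_l])).
    apply (Hd2 s ltac:(eapply Rlt_le_trans; [apply Hs| apply Rmin_r])).
  - intros H. split; intros eps; destruct (H eps) as [d Hd]; exists d; intros s Hs;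
    specialize (Hd s Hs); [eapply Rle_trans; [|apply Hd]; eapply Rle_trans; [|apply Re_le_Cmod] |
     eapply Rle_trans; [|apply Hd]; eapply Rle_trans; [|apply Im_le_Cmod]];
    destruct (a (t+s)), (a t), l; simpl; right; f_equal; ring.
Qed.

Lemma Cmod_plus_le (a b : C) : Cmod (a + b)%C <= Cmod a + Cmod b.
Proof. apply Cmod_triangle. Qed.

Lemma MIX (G : C -> C) (w : R -> C) t l dw :
  cdiff G (w t) l -> isdC w t dw -> isdC (fun s => G (w s)) t (l * dw)%C.
Proof.
  intros HG Hw. apply isdC_rdiffC in Hw. apply isdC_rdiffC.
  intros eps.
  assert (P1 : 0 < eps / (2 * (Cmod dw + 1))).
  { pose proof (Cmod_ge_0 dw). destruct eps; simpl. apply Rdiv_lt_0_compat; lra. }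
  assert (P2 : 0 < eps / (2 * (Cmod l + 1))).
  { pose proof (Cmod_ge_0 l). destruct eps; simpl. apply Rdiv_lt_0_compat; lra. }
  destruct (HG (mkposreal _ P1)) as [d1 Hd1].
  destruct (Hw (mkposreal _ P2)) as [d2 Hd2].
  destruct (Hw (mkposreal 1 Rlt_0_1)) as [d3 Hd3].
  assert (P3 : 0 < d1 / (Cmod dw + 1)).
  { pose proof (Cmod_ge_0 dw). destruct d1; simpl. apply Rdiv_lt_0_compat; lra. }
  exists (mkposreal _ (Rmin_pos _ _ (Rmin_pos _ _ (cond_pos d2) (cond_pos d3)) P3)).
  simpl. intros s Hs.
  assert (Hs2 : Rabs s < d2) by (eapply Rlt_le_trans; [apply Hs|]; eapply Rle_trans; [apply Rmin_l|apply Rmin_l]).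
  assert (Hs3 : Rabs s < d3) by (eapply Rlt_le_trans; [apply Hs|]; eapply Rle_trans; [apply Rmin_l|apply Rmin_r]).
  assert (Hs4 : Rabs s < d1 / (Cmod dw + 1)) by (eapply Rlt_le_trans; [apply Hs|]; apply Rmin_r).
  specialize (Hd2 s Hs2). specialize (Hd3 s Hs3). simpl in Hd2, Hd3.
  set (k := (w (t + s)%R - w t)%C).
  assert (Hk : Cmod k <= (Cmod dw + 1) * Rabs s).
  { replace k with ((w (t + s)%R - w t - RtoC s * dw) + RtoC s * dw)%C by (unfold k; ring).
    eapply Rle_trans. apply Cmod_plus_le. rewrite Cmod_mult, Cmod_R.
    pose proof (Rabs_pos s). nra. }
  assert (Hk2 : Cmod k < d1).
  { pose proof (Cmod_ge_0 dw). eapply Rle_lt_trans. apply Hk.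
    apply Rmult_lt_reg_l with (/ (Cmod dw + 1)). apply Rinv_0_lt_compat; lra.
    rewrite <- Rmult_assoc, Rinv_l, Rmult_1_l by lra. rewrite Rmult_comm. exact Hs4. }
  specialize (Hd1 k Hk2). simpl in Hd1.
  replace (w (t + s)%R) with (w t + k)%C by (unfold k; ring).
  replace (G (w t + k)%C - G (w t) - RtoC s * (l * dw))%C
    with ((G (w t + k)%C - G (w t) - l * k) + l * (w (t + s)%R - w t - RtoC s * dw))%C
    by (unfold k; ring).
  eapply Rle_trans. apply Cmod_plus_le. rewrite Cmod_mult.
  pose proof (Cmod_ge_0 dw). pose proof (Cmod_ge_0 l). pose proof (Rabs_pos s).
  pose proof (Cmod_ge_0 k).
  apply Rle_trans with (eps / (2 * (Cmod dw + 1)) * ((Cmod dw + 1) * Rabs s)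
     + Cmod l * (eps / (2 * (Cmod l + 1)) * Rabs s)).
  apply Rplus_le_compat. eapply Rle_trans. apply Hd1. apply Rmult_le_compat_l. lra. exact Hk.
  apply Rmult_le_compat_l; auto.
  assert (Cmod l * (eps / (2 * (Cmod l + 1)) * Rabs s) <= eps / 2 * Rabs s).
  { replace (Cmod l * (eps / (2 * (Cmod l + 1)) * Rabs s)) with
      ((Cmod l / (Cmod l + 1)) * (eps / 2 * Rabs s)) by (field; lra).
    rewrite <- (Rmult_1_l (eps / 2 * Rabs s)) at 2. apply Rmult_le_compat_r.
    destruct eps; simpl; nra. apply Rmult_le_reg_r with (Cmod l + 1). lra.
    unfold Rdiv. rewrite Rmult_assoc, Rinv_l; lra. }
  replace (eps / (2 * (Cmod dw + 1)) * ((Cmod dw + 1) * Rabs s)) with (eps / 2 * Rabs s) by (field; lra).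
  lra.
Qed.

Lemma isdC_derC a t l : isdC a t l -> derC a t = l.
Proof.
  intros [H1 H2]. unfold derC. destruct l as [l1 l2]. f_equal; apply is_derive_unique; auto.
Qed.

Lemma isdC_ex a t l : isdC a t l -> ex_derive (fun s => Re (a s)) t /\ ex_derive (fun s => Im (a s)) t.
Proof. intros [H1 H2]. split; eexists; eauto. Qed.

Lemma isdC_of_ex a t : ex_derive (fun s => Re (a s)) t -> ex_derive (fun s => Im (a s)) t -> isdC a t (derC a t).
Proof. intros H1 H2. split; apply Derive_correct; auto. Qed.

Lemma isdC_ext_loc a b t l : locally t (fun s => a s = b s) -> isdC a t l -> isdC b t l.
Proof.
  intros He [H1 H2]. split; eapply is_derive_ext_loc; eauto;
  eapply filter_imp; try apply He; intros s Hs; simpl; rewrite Hs; auto.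
Qed.

Lemma isdC_const c t : isdC (fun _ => c) t (RtoC 0).
Proof. split; simpl; auto_derive; auto. Qed.

Lemma isdC_id t : isdC (fun s => RtoC s) t (RtoC 1).
Proof. split; simpl; auto_derive; auto. Qed.

Lemma Rd_plus f g x a b : is_derive f x a -> is_derive g x b -> is_derive (fun y => f y + g y) x (a + b).
Proof. intros; exact (is_derive_plus f g x a b H H0). Qed.
Lemma Rd_opp f x a : is_derive f x a -> is_derive (fun y => - f y) x (- a).
Proof. intros; exact (is_derive_opp f x a H). Qed.
Lemma Rd_minus f g x a b : is_derive f x a -> is_derive g x b -> is_derive (fun y => f y - g y) x (a - b).
Proof. intros; exact (is_derive_minus f g x a b H H0). Qed.
Lemma Rd_mult f g x a b : is_derive f x a -> is_derive g x b -> is_derive (fun y => f y * g y) x (a * g x + f x * b).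
Proof. intros; exact (is_derive_mult f g x a b H H0 Rmult_comm). Qed.

Lemma isdC_plus a b t la lb : isdC a t la -> isdC b t lb -> isdC (fun s => a s + b s)%C t (la + lb)%C.
Proof. intros [H1 H2] [H3 H4]. split; simpl; apply Rd_plus; auto. Qed.

Lemma isdC_opp a t la : isdC a t la -> isdC (fun s => - a s)%C t (- la)%C.
Proof. intros [H1 H2]. split; simpl; apply Rd_opp; auto. Qed.

Lemma isdC_minus a b t la lb : isdC a t la -> isdC b t lb -> isdC (fun s => a s - b s)%C t (la - lb)%C.
Proof. intros. apply isdC_plus; auto. apply isdC_opp; auto. Qed.

Lemma isdC_mult a b t la lb : isdC a t la -> isdC b t lb ->
  isdC (fun s => a s * b s)%C t (la * b t + a t * lb)%C.
Proof.
  intros [H1 H2] [H3 H4]. split; simpl.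
  - eapply is_derive_ext. intros s. reflexivity.
    match goal with |- is_derive _ _ ?L => replace L with
      ((Re la * Re (b t) + Re (a t) * Re lb) - (Im la * Im (b t) + Im (a t) * Im lb)) end.
    apply Rd_minus; apply Rd_mult; auto.
    destruct la, lb, (a t), (b t). simpl. ring.
  - match goal with |- is_derive _ _ ?L => replace L with
      ((Re la * Im (b t) + Re (a t) * Im lb) + (Im la * Re (b t) + Im (a t) * Re lb)) end.
    apply Rd_plus; apply Rd_mult; auto.
    destruct la, lb, (a t), (b t). simpl. ring.
Qed.

Lemma isdC_scal c a t la : isdC a t la -> isdC (fun s => c * a s)%C t (c * la)%C.
Proof.
  intros H. eapply isdC_ext_loc with (a := fun s => (c * a s)%C). apply filter_forall; auto.
  replace (c * la)%C with (0 * a t + c * la)%C by ring.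
  apply isdC_mult; auto. apply isdC_const.
Qed.

Lemma Re_Cinv z : Re (/ z)%C = Re z / (Re z ^ 2 + Im z ^ 2).
Proof. destruct z; simpl; reflexivity. Qed.
Lemma Im_Cinv z : Im (/ z)%C = - Im z / (Re z ^ 2 + Im z ^ 2).
Proof. destruct z; simpl; reflexivity. Qed.

Lemma C_nz_sq z : z <> RtoC 0 -> Re z ^ 2 + Im z ^ 2 <> 0.
Proof.
  intros H Hc. apply H. destruct z as [x y]; simpl in *.
  assert (x = 0) by nra. assert (y = 0) by nra. subst. reflexivity.
Qed.

Lemma cdiff_plus F G z a b : cdiff F z a -> cdiff G z b -> cdiff (fun w => F w + G w)%C z (a + b)%C.
Proof.
  intros H1 H2. apply is_derive_cdiff. apply cdiff_is_derive in H1, H2.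
  exact (@is_derive_plus C_AbsRing C_NormedModule F G z a b H1 H2).
Qed.

Lemma cdiff_opp F z a : cdiff F z a -> cdiff (fun w => - F w)%C z (- a)%C.
Proof.
  intros H1. apply is_derive_cdiff. apply cdiff_is_derive in H1.
  exact (@is_derive_opp C_AbsRing C_NormedModule F z a H1).
Qed.

Lemma cdiff_minus F G z a b : cdiff F z a -> cdiff G z b -> cdiff (fun w => F w - G w)%C z (a - b)%C.
Proof. intros. apply cdiff_plus; auto. apply cdiff_opp; auto. Qed.

Lemma cdiff_is_derive' G z l : cdiff G z l -> @is_derive C_AbsRing (AbsRing_NormedModule C_AbsRing) G z l.
Proof.
  intros H. split. apply is_linear_scal_l.
  intros x Hx. apply (@is_filter_lim_locally_unique C_AbsRing (AbsRing_NormedModule C_AbsRing)) in Hx. subst x.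
  intros eps. destruct (H eps) as [d Hd].
  exists d. intros y Hy.
  change (Cmod (G y - G z - (y - z) * l)%C <= eps * Cmod (y - z)%C).
  replace y with (z + (y - z))%C at 1 by ring.
  replace ((y - z) * l)%C with (l * (y - z))%C by ring.
  apply Hd. exact Hy.
Qed.

Lemma is_derive_cdiff' G z l : @is_derive C_AbsRing (AbsRing_NormedModule C_AbsRing) G z l -> cdiff G z l.
Proof.
  intros [_ H] eps. specialize (H z (fun P HP => HP) eps).
  destruct H as [d Hd]. exists d. intros k Hk.
  assert (E : (z + k - z)%C = k) by ring.
  assert (Hb: ball z d (z+k)%C) by (change (Cmod (z+k-z)%C < d); rewrite E; exact Hk).
  specialize (Hd (z + k)%C Hb).
  change (Cmod (G (z+k) - G z - (z + k - z) * l)%C <= eps * Cmod (z + k - z)%C) in Hd.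
  rewrite E in Hd. replace (l * k)%C with (k * l)%C by ring. apply Hd.
Qed.

Lemma cdiff_mult F G z a b : cdiff F z a -> cdiff G z b ->
  cdiff (fun w => F w * G w)%C z (a * G z + F z * b)%C.
Proof.
  intros H1 H2. apply is_derive_cdiff'. apply cdiff_is_derive' in H1, H2.
  exact (@is_derive_mult C_AbsRing F G z a b H1 H2 Cmult_comm).
Qed.

Lemma cdiff_const c z : cdiff (fun _ => c) z (RtoC 0).
Proof.
  intros eps. exists (mkposreal 1 Rlt_0_1). intros k _.
  replace (c - c - RtoC 0 * k)%C with (RtoC 0) by ring. rewrite Cmod_0.
  apply Rmult_le_pos. destruct eps; simpl; lra. apply Cmod_ge_0.
Qed.

Lemma cdiff_id z : cdiff (fun w => w) z (RtoC 1).
Proof.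
  intros eps. exists (mkposreal 1 Rlt_0_1). intros k _.
  replace (z + k - z - RtoC 1 * k)%C with (RtoC 0) by ring. rewrite Cmod_0.
  apply Rmult_le_pos. destruct eps; simpl; lra. apply Cmod_ge_0.
Qed.

Lemma cdiff_comp F G z a b : cdiff G z b -> cdiff F (G z) a -> cdiff (fun w => F (G w)) z (a * b)%C.
Proof.
  intros H1 H2. apply is_derive_cdiff. apply cdiff_is_derive in H2. apply cdiff_is_derive' in H1.
  replace (a * b)%C with (b * a)%C by ring.
  exact (@is_derive_comp C_AbsRing C_NormedModule F G z a b H2 H1).
Qed.

Lemma cdiff_scal c F z a : cdiff F z a -> cdiff (fun w => c * F w)%C z (c * a)%C.
Proof.
  intros H. replace (c * a)%C with (0 * F z + c * a)%C by ring.
  apply cdiff_mult; auto. apply cdiff_const.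
Qed.

Lemma cdiff_ext_loc F G z a : (exists r : posreal, forall w, Cmod (w - z)%C < r -> F w = G w) ->
  cdiff F z a -> cdiff G z a.
Proof.
  intros [r Hr] H eps. destruct (H eps) as [d Hd].
  exists (mkposreal _ (Rmin_pos _ _ (cond_pos d) (cond_pos r))). simpl. intros k Hk.
  rewrite <- !Hr. apply Hd. eapply Rlt_le_trans. apply Hk. apply Rmin_l.
  replace (z - z)%C with (RtoC 0) by ring. rewrite Cmod_0. destruct r; simpl; lra.
  replace (z + k - z)%C with k by ring. eapply Rlt_le_trans. apply Hk. apply Rmin_r.
Qed.

Lemma Cmod_rev (a b : C) : Cmod a - Cmod b <= Cmod (a + b)%C.
Proof.
  pose proof (Cmod_triangle (a + b)%C (- b)%C). rewrite Cmod_opp in H.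
  replace (a + b + - b)%C with a in H by ring. lra.
Qed.

Lemma cdiff_inv z : z <> RtoC 0 -> cdiff (fun w => / w)%C z (- / (z * z))%C.
Proof.
  intros Hz eps.
  pose proof (proj1 (Cmod_gt_0 z) Hz) as Hm.
  assert (P : 0 < Rmin (Cmod z / 2) (eps * Cmod z ^ 3 / 2)).
  { apply Rmin_pos. lra. pose proof (cond_pos eps). apply Rdiv_lt_0_compat; [|lra]. apply Rmult_lt_0_compat; auto. apply pow_lt; auto. }
  exists (mkposreal _ P). simpl. intros k Hk.
  assert (Hk1 : Cmod k < Cmod z / 2) by (eapply Rlt_le_trans; [apply Hk|apply Rmin_l]).
  assert (Hk2 : Cmod k < eps * Cmod z ^ 3 / 2) by (eapply Rlt_le_trans; [apply Hk|apply Rmin_r]).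
  assert (Hzk : Cmod z / 2 <= Cmod (z + k)%C).
  { pose proof (Cmod_rev z k). lra. }
  assert (Hzk0 : (z + k)%C <> RtoC 0).
  { intros E. rewrite E, Cmod_0 in Hzk. lra. }
  replace (/ (z + k) - / z - - / (z * z) * k)%C with (k * k / (z * z * (z + k)))%C by (field; auto).
  unfold Cdiv. rewrite !Cmod_mult, Cmod_inv, !Cmod_mult by (repeat apply Cmult_neq_0; auto).
  pose proof (Cmod_ge_0 k).
  apply Rle_trans with (Cmod k * Cmod k * / (Cmod z * Cmod z * (Cmod z / 2))).
  apply Rmult_le_compat_l. nra. apply Rinv_le_contravar. repeat apply Rmult_lt_0_compat; lra.
  apply Rmult_le_compat_l; nra.
  replace (Cmod k * Cmod k * / (Cmod z * Cmod z * (Cmod z / 2))) with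
    (Cmod k * (2 * Cmod k / Cmod z ^ 3)) by (field; lra).
  rewrite (Rmult_comm eps). apply Rmult_le_compat_l; auto.
  apply Rmult_le_reg_r with (Cmod z ^ 3). apply pow_lt; auto.
  unfold Rdiv. rewrite Rmult_assoc, Rinv_l. 2: apply pow_nonzero; lra. lra.
Qed.

Lemma cdiff_div F G z a b : cdiff F z a -> cdiff G z b -> G z <> RtoC 0 ->
  cdiff (fun w => F w / G w)%C z ((a * G z - F z * b) / (G z * G z))%C.
Proof.
  intros H1 H2 Hn. unfold Cdiv.
  apply (cdiff_ext_loc (fun w => F w * / G w)%C).
  exists (mkposreal 1 Rlt_0_1); auto.
  assert (Hi : cdiff (fun w => / G w)%C z (- / (G z * G z) * b)%C).
  { apply (cdiff_comp (fun w => / w)%C G). auto. apply cdiff_inv; auto. }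
  pose proof (cdiff_mult _ _ _ _ _ H1 Hi) as HH. cbv beta in HH.
  replace ((a * G z - F z * b) * / (G z * G z))%C with (a * / G z + F z * (- / (G z * G z) * b))%C by (field; auto).
  exact HH.
Qed.

Lemma isdC_inv a t la : a t <> RtoC 0 -> isdC a t la ->
  isdC (fun s => / a s)%C t (- la / (a t * a t))%C.
Proof.
  intros Hz H. replace (- la / (a t * a t))%C with (- / (a t * a t) * la)%C by (field; auto).
  apply (MIX (fun w => / w)%C a). apply cdiff_inv; auto. auto.
Qed.

Lemma isdC_cexpi k t : isdC (fun s => cexpi (k * s)) t (Ci * RtoC k * cexpi (k * t))%C.
Proof.
  unfold cexpi. split; simpl.
  - auto_derive; auto. ring.
  - auto_derive; auto. ring.
Qed.

Definition vx : pt := (RtoC 1, 0).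
Definition vy : pt := (Ci, 0).
Definition vu : pt := (RtoC 0, 1).

Lemma pt_eq (z1 z2 : C) (u1 u2 : R) : z1 = z2 -> u1 = u2 -> ((z1, u1) : pt) = (z2, u2).
Proof. intros; subst; auto. Qed.

Lemma dshift_dshift q v t s : dshift (dshift q v t) v s = dshift q v (t + s).
Proof. unfold dshift; simpl. apply pt_eq. rewrite RtoC_plus. ring. ring. Qed.

Lemma dshift_0 q v : dshift q v 0 = q.
Proof. destruct q. unfold dshift; simpl. apply pt_eq; [ring|ring]. Qed.

Lemma dshift_comm q v w a b : dshift (dshift q v a) w b = dshift (dshift q w b) v a.
Proof. unfold dshift; simpl. apply pt_eq; ring. Qed.

Lemma iterD_app vs1 vs2 g : iterD (vs1 ++ vs2) g = iterD vs1 (iterD vs2 g).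
Proof. induction vs1; simpl; auto. rewrite IHvs1; auto. Qed.

Lemma smooth_iterD U g vs : smooth_on U g -> smooth_on U (iterD vs g).
Proof. intros H vs'. rewrite <- iterD_app. apply H. Qed.

Lemma dirD_derC v g p : dirD v g p = derC (fun t => g (dshift p v t)) 0.
Proof. reflexivity. Qed.

Lemma Rd_shift (f : R -> R) t l : is_derive f 0 l -> is_derive (fun s => f (s - t)) t l.
Proof.
  intros H. assert (H' : is_derive f (t - t) l) by (replace (t - t) with 0 by ring; auto).
  assert (HD : is_derive (fun s : R => s - t) t 1) by (auto_derive; auto).
  pose proof (is_derive_comp f (fun s => s - t) t l 1 H' HD) as HC.
  replace l with (scal 1 l). exact HC. unfold scal; simpl; unfold mult; simpl; ring.
Qed.

Lemma line_deriv g q v t : dirD_ex v g (dshift q v t) ->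
  isdC (fun s => g (dshift q v s)) t (dirD v g (dshift q v t)).
Proof.
  intros [H1 H2].
  assert (E : forall s, dshift q v s = dshift (dshift q v t) v (s - t)).
  { intros s. rewrite dshift_dshift. f_equal. ring. }
  split; simpl.
  - eapply is_derive_ext. intros s. rewrite (E s). reflexivity.
    apply Rd_shift with (f := fun s => Re (g (dshift (dshift q v t) v s))).
    apply Derive_correct; auto.
  - eapply is_derive_ext. intros s. rewrite (E s). reflexivity.
    apply Rd_shift with (f := fun s => Im (g (dshift (dshift q v t) v s))).
    apply Derive_correct; auto.
Qed.

Lemma isdC_dirD_ex v g q l : isdC (fun s => g (dshift q v s)) 0 l -> dirD_ex v g q /\ dirD v g q = l.
Proof.
  intros H. split. apply (isdC_ex _ _ _ H). rewrite dirD_derC. apply isdC_derC; auto.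
Qed.

Lemma dshift_near q v (e : posreal) : exists d : posreal, forall s, Rabs s < d ->
  Cmod (fst (dshift q v s) - fst q)%C < e /\ Rabs (snd (dshift q v s) - snd q) < e.
Proof.
  assert (P : 0 < e / (Cmod (fst v) + Rabs (snd v) + 1)).
  { pose proof (Cmod_ge_0 (fst v)); pose proof (Rabs_pos (snd v)); destruct e; simpl; apply Rdiv_lt_0_compat; lra. }
  exists (mkposreal _ P). simpl. intros s Hs. unfold dshift; simpl.
  pose proof (Cmod_ge_0 (fst v)); pose proof (Rabs_pos (snd v)); pose proof (Rabs_pos s).
  assert (Hs' : Rabs s * (Cmod (fst v) + Rabs (snd v) + 1) < e).
  { apply Rmult_lt_reg_r with (/ (Cmod (fst v) + Rabs (snd v) + 1)). apply Rinv_0_lt_compat; lra.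
    rewrite Rmult_assoc, Rinv_r, Rmult_1_r by lra. exact Hs. }
  split.
  - replace (fst q + RtoC s * fst v - fst q)%C with (RtoC s * fst v)%C by ring.
    rewrite Cmod_mult, Cmod_R. nra.
  - replace (snd q + s * snd v - snd q) with (s * snd v) by ring. rewrite Rabs_mult. nra.
Qed.

Lemma open_line U q v : open_pt U -> U q -> exists d : posreal, forall s, Rabs s < d -> U (dshift q v s).
Proof.
  intros HU Hq. destruct (HU q Hq) as [e He]. destruct (dshift_near q v e) as [d Hd].
  exists d. intros s Hs. destruct (Hd s Hs). destruct (dshift q v s) eqn:E. apply He; auto.
Qed.

Lemma dirD_ext_loc U v G1 G2 q : open_pt U -> U q -> (forall q', U q' -> G1 q' = G2 q') ->
  dirD v G1 q = dirD v G2 q.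
Proof.
  intros HU Hq HG. destruct (open_line U q v HU Hq) as [d Hd].
  unfold dirD. f_equal; apply Derive_ext_loc; exists d; intros s Hs;
  rewrite HG; auto; apply Hd; unfold ball in Hs; simpl in Hs; unfold AbsRing_ball, abs, minus, plus, opp in Hs; simpl in Hs;
  replace s with (s + - 0) by ring; auto.
Qed.

Lemma dirD_ex_ext_loc U v G1 G2 q : open_pt U -> U q -> (forall q', U q' -> G1 q' = G2 q') ->
  dirD_ex v G1 q -> dirD_ex v G2 q.
Proof.
  intros HU Hq HG [H1 H2]. destruct (open_line U q v HU Hq) as [d Hd].
  assert (L : locally 0 (fun s => U (dshift q v s))).
  { exists d. intros s Hs. apply Hd. unfold ball in Hs; simpl in Hs; unfold AbsRing_ball, abs, minus, plus, opp in Hs; simpl in Hs.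
    replace s with (s + - 0) by ring; auto. }
  split.
  - eapply ex_derive_ext_loc. 2: exact H1. eapply filter_imp. 2: exact L. intros s Hs. simpl. rewrite HG; auto.
  - eapply ex_derive_ext_loc. 2: exact H2. eapply filter_imp. 2: exact L. intros s Hs. simpl. rewrite HG; auto.
Qed.

Lemma dirD_scal v G q c : dirD_ex v G q -> dirD v (fun q => c * G q)%C q = (c * dirD v G q)%C /\
  dirD_ex v (fun q => c * G q)%C q.
Proof.
  intros [H1 H2]. pose proof (isdC_of_ex _ _ H1 H2) as H.
  pose proof (isdC_scal c _ _ _ H) as H'.
  split. rewrite !dirD_derC. apply isdC_derC. exact H'.
  apply (isdC_ex _ _ _ H').
Qed.

Lemma MVI (F dF : R -> C) (L : C) (e t0 h : R) :
  (forall c, Rabs (c - t0) <= Rabs h -> isdC F c (dF c) /\ Cmod (dF c - L)%C <= e) ->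
  Cmod (F (t0 + h)%R - F t0 - RtoC h * L)%C <= 2 * e * Rabs h.
Proof.
  intros H.
  destruct (MVT_cor4 (fun s => Re (F s)) (fun s => Re (dF s)) t0 (Rabs h)) with (b := t0 + h) as [c1 [E1 C1]].
  { intros c Hc. apply H; auto. }
  { replace (t0 + h - t0) with h by ring. lra. }
  destruct (MVT_cor4 (fun s => Im (F s)) (fun s => Im (dF s)) t0 (Rabs h)) with (b := t0 + h) as [c2 [E2 C2]].
  { intros c Hc. apply H; auto. }
  { replace (t0 + h - t0) with h by ring. lra. }
  replace (t0 + h - t0) with h in * by ring.
  destruct (H c1 C1) as [_ B1]. destruct (H c2 C2) as [_ B2].
  eapply Rle_trans. apply Cmod_le_sum.
  assert (R1 : Rabs (Re (F (t0 + h)%R - F t0 - RtoC h * L)%C) <= e * Rabs h).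
  { replace (Re (F (t0 + h)%R - F t0 - RtoC h * L)%C) with (Re (F (t0 + h)) - Re (F t0) - h * Re L)
      by (destruct (F (t0+h)%R), (F t0), L; simpl; ring).
    rewrite E1. replace (Re (dF c1) * h - h * Re L) with (h * (Re (dF c1) - Re L)) by ring.
    rewrite Rabs_mult, Rmult_comm. apply Rmult_le_compat_r. apply Rabs_pos.
    eapply Rle_trans; [|apply B1]. eapply Rle_trans; [|apply Re_le_Cmod].
    destruct (dF c1), L; simpl; right; f_equal; ring. }
  assert (R2 : Rabs (Im (F (t0 + h)%R - F t0 - RtoC h * L)%C) <= e * Rabs h).
  { replace (Im (F (t0 + h)%R - F t0 - RtoC h * L)%C) with (Im (F (t0 + h)) - Im (F t0) - h * Im L)
      by (destruct (F (t0+h)%R), (F t0), L; simpl; ring).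
    rewrite E2. replace (Im (dF c2) * h - h * Im L) with (h * (Im (dF c2) - Im L)) by ring.
    rewrite Rabs_mult, Rmult_comm. apply Rmult_le_compat_r. apply Rabs_pos.
    eapply Rle_trans; [|apply B2]. eapply Rle_trans; [|apply Im_le_Cmod].
    destruct (dF c2), L; simpl; right; f_equal; ring. }
  lra.
Qed.

Lemma Cmod_pair_le (a b c : R) : Rabs c <= Rabs b -> Cmod ((a, c) : C) <= Cmod ((a, b) : C).
Proof.
  intros H. unfold Cmod; simpl. apply sqrt_le_1_alt.
  assert (c * c <= b * b).
  { assert (E1 : c * c = Rabs c * Rabs c) by (rewrite <- Rabs_mult; rewrite Rabs_right; nra).
    assert (E2 : b * b = Rabs b * Rabs b) by (rewrite <- Rabs_mult; rewrite Rabs_right; nra).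
    pose proof (Rabs_pos c). nra. }
  nra.
Qed.

Lemma C_decomp (k : C) : k = (RtoC (Re k) + RtoC (Im k) * Ci)%C.
Proof. destruct k as [a b]. unfold RtoC, Ci; simpl. apply injective_projections; simpl; ring. Qed.

Definition CRp (g : pt -> C) (q : pt) : Prop := dirD vy g q = (Ci * dirD vx g q)%C.

Lemma HOLO U g q : open_pt U -> smooth_on U g -> (forall q', U q' -> CRp g q') -> U q ->
  cdiff (fun w => g (w, snd q)) (fst q) (dirD vx g q).
Proof.
  intros HU Hg HCR Hq. destruct q as [z u]. simpl.
  intros eps.
  destruct (HU (z,u) Hq) as [e0 He0].
  assert (Pe : 0 < eps / 4) by (pose proof (cond_pos eps); lra).
  destruct (proj1 (Hg (vx :: nil)) (z,u) Hq (mkposreal _ Pe)) as [dx Hdx].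
  destruct (proj1 (Hg (vy :: nil)) (z,u) Hq (mkposreal _ Pe)) as [dy Hdy].
  simpl in Hdx, Hdy.
  exists (mkposreal _ (Rmin_pos _ _ (cond_pos e0) (Rmin_pos _ _ (cond_pos dx) (cond_pos dy)))).
  simpl. intros k Hk.
  assert (Hk0 : Cmod k < e0) by (eapply Rlt_le_trans; [apply Hk|apply Rmin_l]).
  assert (Hkx : Cmod k < dx) by (eapply Rlt_le_trans; [apply Hk|]; eapply Rle_trans; [apply Rmin_r|apply Rmin_l]).
  assert (Hky : Cmod k < dy) by (eapply Rlt_le_trans; [apply Hk|]; eapply Rle_trans; [apply Rmin_r|apply Rmin_r]).
  set (a := Re k). set (b := Im k).
  assert (Ha : Rabs a <= Cmod k) by apply Re_le_Cmod.
  assert (Hb : Rabs b <= Cmod k) by apply Im_le_Cmod.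
  set (l := dirD vx g (z, u)).
  assert (SA : Cmod (g (dshift (z,u) vx (0 + a)%R) - g (dshift (z,u) vx 0) - RtoC a * l)%C <= 2 * (eps/4) * Rabs a).
  { apply (MVI (fun s => g (dshift (z,u) vx s)) (fun s => dirD vx g (dshift (z,u) vx s))).
    intros c Hc. rewrite Rminus_0_r in Hc.
    assert (Pc : Cmod (fst (dshift (z,u) vx c) - z)%C = Rabs c /\ snd (dshift (z,u) vx c) - u = 0).
    { unfold dshift, vx; simpl. split. replace (z + RtoC c * RtoC 1 - z)%C with (RtoC c) by ring. apply Cmod_R. ring. }
    destruct Pc as [Pc1 Pc2].
    assert (HU' : U (dshift (z,u) vx c)).
    { destruct (dshift (z,u) vx c) eqn:E. simpl in *. apply He0. rewrite Pc1; lra. rewrite Pc2, Rabs_R0. apply cond_pos. }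
    split. apply line_deriv. apply (proj2 (Hg nil)); auto.
    left. apply Hdx. rewrite Pc1; lra. rewrite Pc2, Rabs_R0. apply cond_pos. }
  set (p1 := ((z + RtoC a)%C, u)).
  assert (SB : Cmod (g (dshift p1 vy (0 + b)%R) - g (dshift p1 vy 0) - RtoC b * (Ci * l))%C <= 2 * (eps/4) * Rabs b).
  { apply (MVI (fun s => g (dshift p1 vy s)) (fun s => dirD vy g (dshift p1 vy s))).
    intros c Hc. rewrite Rminus_0_r in Hc.
    assert (Pc : Cmod (fst (dshift p1 vy c) - z)%C <= Cmod k /\ snd (dshift p1 vy c) - u = 0).
    { unfold dshift, vy, p1; simpl. split. 2: ring.
      replace (z + RtoC a + RtoC c * Ci - z)%C with ((a, c) : C).
      replace (Cmod k) with (Cmod ((a, b) : C)). apply Cmod_pair_le; auto.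
      unfold a, b. destruct k; reflexivity.
      unfold RtoC, Ci. apply injective_projections; simpl; ring. }
    destruct Pc as [Pc1 Pc2].
    assert (HU' : U (dshift p1 vy c)).
    { destruct (dshift p1 vy c) eqn:E. simpl in *. apply He0. lra. rewrite Pc2, Rabs_R0. apply cond_pos. }
    split. apply line_deriv. apply (proj2 (Hg nil)); auto.
    replace (Ci * l)%C with (dirD vy g (z,u)) by (apply HCR; auto). left. apply Hdy. lra. rewrite Pc2, Rabs_R0. apply cond_pos. }
  assert (Ek : k = (RtoC a + RtoC b * Ci)%C) by (unfold a, b; apply C_decomp).
  assert (E1 : dshift p1 vy (0 + b)%R = ((z + k)%C, u)).
  { unfold dshift, p1, vy; simpl. apply pt_eq. rewrite Ek, Rplus_0_l. ring. ring. }
  assert (E2 : dshift p1 vy 0 = dshift (z,u) vx (0 + a)%R).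
  { unfold dshift, p1, vy, vx; simpl. apply pt_eq; rewrite ?Rplus_0_l, ?Rmult_0_l; try ring. }
  assert (E3 : dshift (z,u) vx 0 = (z, u)).
  { apply dshift_0. }
  rewrite E1, E2 in SB. rewrite E3 in SA.
  replace (g ((z + k)%C, u) - g (z, u) - l * k)%C with
    ((g ((z + k)%C, u) - g (dshift (z, u) vx (0 + a)%R) - RtoC b * (Ci * l)) +
     (g (dshift (z, u) vx (0 + a)%R) - g (z, u) - RtoC a * l))%C.
  2: { rewrite Ek. ring. }
  eapply Rle_trans. apply Cmod_triangle.
  assert (eps / 4 * Rabs a <= eps / 4 * Cmod k) by (apply Rmult_le_compat_l; lra).
  assert (eps / 4 * Rabs b <= eps / 4 * Cmod k) by (apply Rmult_le_compat_l; lra).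
  lra.
Qed.

Lemma Schwarz_gen (F G1 G2 H12 H21 : R -> R -> R) (d : posreal) :
  (forall a b, Rabs a < d -> Rabs b < d ->
     is_derive (fun z => F z b) a (G1 a b) /\ is_derive (fun t => F a t) b (G2 a b) /\
     is_derive (fun z => G2 z b) a (H12 a b) /\ is_derive (fun t => G1 a t) b (H21 a b)) ->
  continuity_2d_pt H12 0 0 -> continuity_2d_pt H21 0 0 -> H12 0 0 = H21 0 0.
Proof.
  intros HD C12 C21.
  assert (Pd : 0 < d / 2) by (pose proof (cond_pos d); lra).
  assert (E2 : forall z v, Rabs z < d -> Rabs v < d -> Derive (fun t => F z t) v = G2 z v).
  { intros z v Hz Hv. apply is_derive_unique. apply HD; auto. }
  assert (E1 : forall z u, Rabs u < d -> Rabs z < d -> Derive (fun t => F t z) u = G1 u z).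
  { intros z u Hu Hz. apply is_derive_unique. apply HD; auto. }
  assert (L12 : forall u v, Rabs u < d / 2 -> Rabs v < d / 2 ->
     is_derive (fun z => Derive (fun t => F z t) v) u (H12 u v)).
  { intros u v Hu Hv. eapply is_derive_ext_loc. 2: apply (HD u v); lra.
    exists (mkposreal _ Pd). intros z Hz. unfold ball in Hz; simpl in Hz.
    unfold AbsRing_ball, abs, minus, plus, opp in Hz; simpl in Hz.
    change (z + - u) with (z - u) in Hz.
    symmetry. apply E2. pose proof (Rabs_triang_inv z u). lra. lra. }
  assert (L21 : forall u v, Rabs u < d / 2 -> Rabs v < d / 2 ->
     is_derive (fun z => Derive (fun t => F t z) u) v (H21 u v)).
  { intros u v Hu Hv. eapply is_derive_ext_loc. 2: apply (HD u v); lra.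
    exists (mkposreal _ Pd). intros z Hz. unfold ball in Hz; simpl in Hz.
    unfold AbsRing_ball, abs, minus, plus, opp in Hz; simpl in Hz.
    change (z + - v) with (z - v) in Hz.
    symmetry. apply E1. lra. pose proof (Rabs_triang_inv z v). lra. }
  assert (R0 : Rabs 0 < d / 2) by (rewrite Rabs_R0; lra).
  rewrite <- (is_derive_unique _ _ _ (L12 0 0 R0 R0)).
  rewrite <- (is_derive_unique _ _ _ (L21 0 0 R0 R0)).
  apply Schwarz.
  - exists (mkposreal _ Pd). intros u v Hu Hv. rewrite Rminus_0_r in Hu, Hv. simpl in Hu, Hv.
    split; [|split; [|split]].
    + assert (Hu' : Rabs u < d) by lra. assert (Hv' : Rabs v < d) by lra.
      eexists. apply (proj1 (HD u v Hu' Hv')).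
    + assert (Hu' : Rabs u < d) by lra. assert (Hv' : Rabs v < d) by lra.
      eexists. apply (proj1 (proj2 (HD u v Hu' Hv'))).
    + eexists. apply L12; auto.
    + eexists. apply L21; auto.
  - intros eps. destruct (C12 eps) as [e He].
    exists (mkposreal _ (Rmin_pos _ _ (cond_pos e) Pd)). simpl. intros u v Hu Hv.
    rewrite Rminus_0_r in Hu, Hv.
    assert (Hu2 : Rabs u < d / 2) by (eapply Rlt_le_trans; [apply Hu|apply Rmin_r]).
    assert (Hv2 : Rabs v < d / 2) by (eapply Rlt_le_trans; [apply Hv|apply Rmin_r]).
    match goal with |- Rabs (?A - ?B) < _ => replace A with (H12 u v); [replace B with (H12 0 0)|] end.
    apply He; rewrite Rminus_0_r; (eapply Rlt_le_trans; [apply Hu || apply Hv | apply Rmin_l]).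
    symmetry; apply is_derive_unique; apply L12; auto.
    symmetry; apply is_derive_unique; apply L12; auto.
  - intros eps. destruct (C21 eps) as [e He].
    exists (mkposreal _ (Rmin_pos _ _ (cond_pos e) Pd)). simpl. intros u v Hu Hv.
    rewrite Rminus_0_r in Hu, Hv.
    assert (Hu2 : Rabs u < d / 2) by (eapply Rlt_le_trans; [apply Hu|apply Rmin_r]).
    assert (Hv2 : Rabs v < d / 2) by (eapply Rlt_le_trans; [apply Hv|apply Rmin_r]).
    match goal with |- Rabs (?A - ?B) < _ => replace A with (H21 u v); [replace B with (H21 0 0)|] end.
    apply He; rewrite Rminus_0_r; (eapply Rlt_le_trans; [apply Hu || apply Hv | apply Rmin_l]).
    symmetry; apply is_derive_unique; apply L21; auto.
    symmetry; apply is_derive_unique; apply L21; auto.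
Qed.

Lemma near2 q v w (e : posreal) : exists d : posreal, forall a b, Rabs a < d -> Rabs b < d ->
  Cmod (fst (dshift (dshift q v a) w b) - fst q)%C < e /\ Rabs (snd (dshift (dshift q v a) w b) - snd q) < e.
Proof.
  set (M := Cmod (fst v) + Cmod (fst w) + Rabs (snd v) + Rabs (snd w) + 1).
  pose proof (Cmod_ge_0 (fst v)); pose proof (Cmod_ge_0 (fst w));
  pose proof (Rabs_pos (snd v)); pose proof (Rabs_pos (snd w)).
  assert (HM : 1 <= M) by (unfold M; lra).
  assert (P : 0 < e / (2 * M)) by (pose proof (cond_pos e); apply Rdiv_lt_0_compat; lra).
  exists (mkposreal _ P). simpl. intros a b Ha Hb. unfold dshift; simpl.
  pose proof (Rabs_pos a); pose proof (Rabs_pos b).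
  assert (Ha' : Rabs a * M < e / 2).
  { apply Rmult_lt_reg_r with (/ M). apply Rinv_0_lt_compat; lra.
    rewrite Rmult_assoc, Rinv_r, Rmult_1_r by lra. replace (e / 2 * / M) with (e / (2 * M)) by (field; lra). exact Ha. }
  assert (Hb' : Rabs b * M < e / 2).
  { apply Rmult_lt_reg_r with (/ M). apply Rinv_0_lt_compat; lra.
    rewrite Rmult_assoc, Rinv_r, Rmult_1_r by lra. replace (e / 2 * / M) with (e / (2 * M)) by (field; lra). exact Hb. }
  assert (A1 : Rabs a * Cmod (fst v) <= Rabs a * M) by (apply Rmult_le_compat_l; unfold M; lra).
  assert (A2 : Rabs b * Cmod (fst w) <= Rabs b * M) by (apply Rmult_le_compat_l; unfold M; lra).
  assert (A3 : Rabs a * Rabs (snd v) <= Rabs a * M) by (apply Rmult_le_compat_l; unfold M; lra).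
  assert (A4 : Rabs b * Rabs (snd w) <= Rabs b * M) by (apply Rmult_le_compat_l; unfold M; lra).
  split.
  - replace (fst q + RtoC a * fst v + RtoC b * fst w - fst q)%C with (RtoC a * fst v + RtoC b * fst w)%C by ring.
    eapply Rle_lt_trans. apply Cmod_triangle. rewrite !Cmod_mult, !Cmod_R. lra.
  - replace (snd q + a * snd v + b * snd w - snd q) with (a * snd v + b * snd w) by ring.
    eapply Rle_lt_trans. apply Rabs_triang. rewrite !Rabs_mult. lra.
Qed.

Section Comm.
Variable Pj : C -> R.
Hypothesis HPd : forall a t l, isdC a t l -> is_derive (fun s => Pj (a s)) t (Pj l).
Hypothesis HPc : forall x y, Rabs (Pj x - Pj y) <= Cmod (x - y)%C.

Lemma COMM_comp U g v w q : open_pt U -> smooth_on U g -> U q ->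
  Pj (dirD v (dirD w g) q) = Pj (dirD w (dirD v g) q).
Proof.
  intros HU Hg Hq.
  destruct (HU q Hq) as [e0 He0]. destruct (near2 q v w e0) as [d Hd].
  set (P := fun a b => dshift (dshift q v a) w b).
  assert (HP : forall a b, Rabs a < d -> Rabs b < d -> U (P a b)).
  { intros a b Ha Hb. destruct (Hd a b Ha Hb) as [X Y]. unfold P.
    destruct (dshift (dshift q v a) w b) eqn:E. destruct q. apply He0; auto. }
  assert (P00 : P 0 0 = q) by (unfold P; rewrite !dshift_0; auto).
  assert (Hcomm : forall a b, P a b = dshift (dshift q w b) v a) by (intros; unfold P; apply dshift_comm).
  pose proof (Schwarz_gen (fun a b => Pj (g (P a b))) (fun a b => Pj (dirD v g (P a b)))
    (fun a b => Pj (dirD w g (P a b))) (fun a b => Pj (dirD v (dirD w g) (P a b)))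
    (fun a b => Pj (dirD w (dirD v g) (P a b))) d) as S.
  cbv beta in S. rewrite P00 in S. apply S; clear S.
  - intros a b Ha Hb. pose proof (HP a b Ha Hb) as Hab.
    split; [|split; [|split]].
    + eapply is_derive_ext. intros z. rewrite (Hcomm z b). reflexivity.
      rewrite (Hcomm a b). apply HPd. apply line_deriv. rewrite <- Hcomm.
      apply (proj2 (Hg nil)); auto.
    + apply HPd. apply line_deriv. apply (proj2 (Hg nil)); auto.
    + eapply is_derive_ext. intros z. rewrite (Hcomm z b). reflexivity.
      rewrite (Hcomm a b). apply HPd. apply line_deriv with (g := dirD w g). rewrite <- Hcomm.
      apply (proj2 (Hg (w :: nil))); auto.
    + apply HPd. apply line_deriv with (g := dirD v g). apply (proj2 (Hg (v :: nil))); auto.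
  - intros eps. destruct (proj1 (Hg (v :: w :: nil)) q Hq eps) as [dc Hdc].
    destruct (near2 q v w dc) as [d2 Hd2]. exists d2. intros a b Ha Hb.
    rewrite Rminus_0_r in Ha, Hb. rewrite P00.
    eapply Rle_lt_trans. apply HPc. apply Hdc; apply Hd2; auto.
  - intros eps. destruct (proj1 (Hg (w :: v :: nil)) q Hq eps) as [dc Hdc].
    destruct (near2 q v w dc) as [d2 Hd2]. exists d2. intros a b Ha Hb.
    rewrite Rminus_0_r in Ha, Hb. rewrite P00.
    eapply Rle_lt_trans. apply HPc. apply Hdc; apply Hd2; auto.
Qed.
End Comm.

Lemma COMM U g v w q : open_pt U -> smooth_on U g -> U q ->
  dirD v (dirD w g) q = dirD w (dirD v g) q.
Proof.
  intros HU Hg Hq. apply injective_projections.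
  - apply (COMM_comp Re) with (U := U); auto.
    + intros a t l [H1 H2]; auto.
    + intros x y. eapply Rle_trans; [|apply Re_le_Cmod]. destruct x, y; simpl; right; f_equal; ring.
  - apply (COMM_comp Im) with (U := U); auto.
    + intros a t l [H1 H2]; auto.
    + intros x y. eapply Rle_trans; [|apply Im_le_Cmod]. destruct x, y; simpl; right; f_equal; ring.
Qed.

Lemma isdC_line z a t : isdC (fun s => z + RtoC s * a)%C t a.
Proof.
  pose proof (isdC_plus _ _ t _ _ (isdC_const z t) (isdC_mult _ _ t _ _ (isdC_id t) (isdC_const a t))) as H.
  cbv beta in H. assert (E: (RtoC 0 + (RtoC 1 * a + RtoC t * RtoC 0))%C = a) by ring.
  rewrite E in H. exact H.
Qed.

Lemma holo_dir g q a l : cdiff (fun w => g (w, snd q)) (fst q) l ->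
  dirD_ex (a, 0) g q /\ dirD (a, 0) g q = (l * a)%C.
Proof.
  intros H. apply isdC_dirD_ex.
  pose proof (MIX (fun w => g (w, snd q)) (fun s => fst q + RtoC s * a)%C 0 l a) as M.
  cbv beta in M. replace (fst q + RtoC 0 * a)%C with (fst q) in M by ring.
  specialize (M H (isdC_line _ _ _)).
  eapply isdC_ext_loc. 2: exact M. apply filter_forall. intros s. simpl.
  unfold dshift; simpl. f_equal. apply pt_eq; auto. ring.
Qed.

Lemma CONST (G : C -> C) z0 (r : R) : (forall w, Cmod (w - z0)%C < r -> cdiff G w (RtoC 0)) ->
  forall w, Cmod (w - z0)%C < r -> G w = G z0.
Proof.
  intros HG w Hw.
  set (gam := fun t : R => (z0 + RtoC t * (w - z0))%C).
  assert (Hd : forall c, Rabs (c - 0) <= Rabs 1 -> isdC (fun t => G (gam t)) c (RtoC 0) /\ Cmod (RtoC 0 - RtoC 0)%C <= 0).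
  { intros c Hc. rewrite Rminus_0_r, Rabs_R1 in Hc. split.
    - replace (RtoC 0) with (RtoC 0 * (w - z0))%C by ring.
      apply MIX. apply HG. unfold gam.
      replace (z0 + RtoC c * (w - z0) - z0)%C with (RtoC c * (w - z0))%C by ring.
      rewrite Cmod_mult, Cmod_R. pose proof (Cmod_ge_0 (w - z0)%C).
      apply Rle_lt_trans with (1 * Cmod (w - z0)%C). apply Rmult_le_compat_r; auto. lra.
      unfold gam. apply isdC_line.
    - replace (RtoC 0 - RtoC 0)%C with (RtoC 0) by ring. rewrite Cmod_0. lra. }
  pose proof (MVI (fun t => G (gam t)) (fun _ => RtoC 0) (RtoC 0) 0 0 1 Hd) as M.
  unfold gam in M. replace (z0 + RtoC (0 + 1) * (w - z0))%C with w in M.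
  replace (z0 + RtoC 0 * (w - z0))%C with z0 in M by ring.
  assert (Cmod (G w - G z0 - RtoC 1 * RtoC 0)%C = 0).
  { apply Rle_antisym. lra. apply Cmod_ge_0. }
  apply Cmod_eq_0 in H. replace (G w) with ((G w - G z0 - RtoC 1 * RtoC 0) + G z0)%C by ring.
  rewrite H. ring.
  rewrite Rplus_0_l. ring.
Qed.

Section HoloF.
Variable U : pt -> Prop.
Variable f : pt -> C.
Hypothesis HU : open_pt U.
Hypothesis Hs : smooth_on U f.
Hypothesis Hh : holo_in_zeta_on U f.

Lemma CR_f q : U q -> CRp f q.
Proof.
  intros Hq. pose proof (C_diff_cdiff _ _ (Hh q Hq)) as H.
  unfold CRp, vx, vy.
  rewrite (proj2 (holo_dir f q Ci _ H)), (proj2 (holo_dir f q (RtoC 1) _ H)). ring.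
Qed.

Lemma CR_iter vs q : U q -> CRp (iterD vs f) q.
Proof.
  revert q. induction vs as [|v vs IH]; intros q Hq.
  - apply CR_f; auto.
  - simpl. unfold CRp.
    assert (HG : smooth_on U (iterD vs f)) by (apply smooth_iterD; auto).
    rewrite (COMM U (iterD vs f) vy v q HU HG Hq).
    rewrite (dirD_ext_loc U v (dirD vy (iterD vs f)) (fun q' => Ci * dirD vx (iterD vs f) q')%C q HU Hq).
    2: { intros q' Hq'. apply IH; auto. }
    rewrite (proj1 (dirD_scal v (dirD vx (iterD vs f)) q Ci ltac:(apply (proj2 (HG (vx :: nil))); auto))).
    rewrite (COMM U (iterD vs f) v vx q HU HG Hq). reflexivity.
Qed.

Lemma HOLO_iter vs q : U q -> cdiff (fun w => iterD vs f (w, snd q)) (fst q) (iterD (vx :: vs) f q).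
Proof.
  intros Hq. apply HOLO with (U := U); auto. apply smooth_iterD; auto.
  intros; apply CR_iter; auto.
Qed.

Lemma U_near q : U q -> exists r : posreal, forall w, Cmod (w - fst q)%C < r -> U (w, snd q).
Proof.
  intros Hq. destruct (HU q Hq) as [e He]. exists e. intros w Hw. apply He; auto.
  rewrite Rminus_eq_0, Rabs_R0. apply cond_pos.
Qed.

Lemma Dz_iter G vs q : (forall q', U q' -> G q' = iterD vs f q') -> U q ->
  Dz G q = iterD (vx :: vs) f q.
Proof.
  intros HG Hq. unfold Dz. apply cdiff_C_derive.
  apply cdiff_ext_loc with (F := fun w => iterD vs f (w, snd q)).
  destruct (U_near q Hq) as [r Hr]. exists r. intros w Hw. symmetry. apply HG. apply Hr; auto.
  apply HOLO_iter; auto.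
Qed.

End HoloF.

Definition P0 (I : R -> Prop) (a : R -> C) : Prop :=
  forall t, I t -> ex_derive (fun s => Re (a s)) t /\ ex_derive (fun s => Im (a s)) t.

Definition Qn (I : R -> Prop) (n : nat) (a : R -> C) : Prop :=
  forall k, (k <= n)%nat -> P0 I (Nat.iter k derC a).

Lemma iter_S a k : Nat.iter (S k) derC a = Nat.iter k derC (derC a).
Proof. rewrite Nat.iter_succ_r. reflexivity. Qed.

Lemma open_R_loc I t : open_R I -> I t -> locally t I.
Proof.
  intros HI Ht. destruct (HI t Ht) as [e He]. exists e. intros s Hs. apply He.
  unfold ball in Hs; simpl in Hs; unfold AbsRing_ball, abs, minus, plus, opp in Hs; simpl in Hs. exact Hs.
Qed.

Lemma derC_ext I a b t : open_R I -> (forall s, I s -> a s = b s) -> I t -> derC a t = derC b t.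
Proof.
  intros HI H Ht. unfold derC. f_equal; apply Derive_ext_loc;
  (eapply filter_imp; [|apply (open_R_loc I t HI Ht)]); intros s Hs; simpl; rewrite H; auto.
Qed.

Lemma iter_ext I a b k : open_R I -> (forall s, I s -> a s = b s) -> forall t, I t ->
  Nat.iter k derC a t = Nat.iter k derC b t.
Proof.
  intros HI. revert a b. induction k; intros a b H t Ht.
  - simpl. auto.
  - rewrite !iter_S. apply IHk; auto. intros s Hs. apply derC_ext with I; auto.
Qed.

Lemma P0_ext I a b : open_R I -> (forall s, I s -> a s = b s) -> P0 I a -> P0 I b.
Proof.
  intros HI H Ha t Ht. destruct (Ha t Ht) as [H1 H2].
  split.
  - eapply ex_derive_ext_loc; [|exact H1].
    eapply filter_imp; [|apply (open_R_loc I t HI Ht)]. intros s Hs; simpl; rewrite H; auto.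
  - eapply ex_derive_ext_loc; [|exact H2].
    eapply filter_imp; [|apply (open_R_loc I t HI Ht)]. intros s Hs; simpl; rewrite H; auto.
Qed.

Lemma Qn_ext I n a b : open_R I -> (forall s, I s -> a s = b s) -> Qn I n a -> Qn I n b.
Proof.
  intros HI H Ha k Hk. apply P0_ext with (Nat.iter k derC a); auto.
  apply iter_ext; auto.
Qed.

Lemma Qn_S I n a : P0 I a -> Qn I n (derC a) -> Qn I (S n) a.
Proof.
  intros H0 H k Hk. destruct k. simpl; auto.
  rewrite iter_S. apply H. lia.
Qed.

Lemma Qn_S_inv I n a : Qn I (S n) a -> P0 I a /\ Qn I n (derC a).
Proof.
  intros H. split. apply (H 0%nat); lia.
  intros k Hk. rewrite <- iter_S. apply H. lia.
Qed.

Lemma Qn_mono I n a : Qn I (S n) a -> Qn I n a.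
Proof. intros H k Hk. apply H. lia. Qed.

Lemma P0_isdC I a t : P0 I a -> I t -> isdC a t (derC a t).
Proof. intros H Ht. destruct (H t Ht). apply isdC_of_ex; auto. Qed.

Lemma P0_of_isdC I a (da : R -> C) : (forall t, I t -> isdC a t (da t)) -> P0 I a.
Proof. intros H t Ht. apply (isdC_ex _ _ _ (H t Ht)). Qed.

Section Closure.
Variable I : R -> Prop.
Hypothesis HI : open_R I.

Lemma Qn_plus n : forall a b, Qn I n a -> Qn I n b -> Qn I n (fun t => a t + b t)%C.
Proof.
  induction n; intros a b Ha Hb.
  - intros k Hk. assert (k = 0%nat) by lia. subst. simpl.
    apply P0_of_isdC with (da := fun t => (derC a t + derC b t)%C).
    intros t Ht. apply isdC_plus; apply P0_isdC with I; auto; [apply (Ha 0%nat)|apply (Hb 0%nat)]; lia.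
  - destruct (Qn_S_inv _ _ _ Ha) as [Ha0 Ha1]. destruct (Qn_S_inv _ _ _ Hb) as [Hb0 Hb1].
    apply Qn_S.
    + apply P0_of_isdC with (da := fun t => (derC a t + derC b t)%C).
      intros t Ht. apply isdC_plus; apply P0_isdC with I; auto.
    + apply Qn_ext with (fun t => derC a t + derC b t)%C; auto.
      intros s Hs. symmetry. apply isdC_derC. apply isdC_plus; apply P0_isdC with I; auto.
Qed.

Lemma Qn_const n c : Qn I n (fun _ => c).
Proof.
  induction n.
  - intros k Hk. assert (k = 0%nat) by lia. subst. simpl.
    apply P0_of_isdC with (da := fun _ => RtoC 0). intros; apply isdC_const.
  - apply Qn_S. apply P0_of_isdC with (da := fun _ => RtoC 0). intros; apply isdC_const.
    apply Qn_ext with (fun _ => RtoC 0); auto. intros s Hs. symmetry. apply isdC_derC, isdC_const.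
    (* IHn is for c; we need it for 0 *)
    clear IHn. induction n.
    + intros k Hk. assert (k = 0%nat) by lia. subst. simpl.
      apply P0_of_isdC with (da := fun _ => RtoC 0). intros; apply isdC_const.
    + apply Qn_S. apply P0_of_isdC with (da := fun _ => RtoC 0). intros; apply isdC_const.
      apply Qn_ext with (fun _ => RtoC 0); auto. intros s Hs. symmetry. apply isdC_derC, isdC_const.
Qed.

Lemma Qn_mult n : forall a b, Qn I n a -> Qn I n b -> Qn I n (fun t => a t * b t)%C.
Proof.
  induction n; intros a b Ha Hb.
  - intros k Hk. assert (k = 0%nat) by lia. subst. simpl.
    apply P0_of_isdC with (da := fun t => (derC a t * b t + a t * derC b t)%C).
    intros t Ht. apply isdC_mult; apply P0_isdC with I; auto; [apply (Ha 0%nat)|apply (Hb 0%nat)]; lia.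
  - destruct (Qn_S_inv _ _ _ Ha) as [Ha0 Ha1]. destruct (Qn_S_inv _ _ _ Hb) as [Hb0 Hb1].
    apply Qn_S.
    + apply P0_of_isdC with (da := fun t => (derC a t * b t + a t * derC b t)%C).
      intros t Ht. apply isdC_mult; apply P0_isdC with I; auto.
    + apply Qn_ext with (fun t => derC a t * b t + a t * derC b t)%C; auto.
      intros s Hs. symmetry. apply isdC_derC. apply isdC_mult; apply P0_isdC with I; auto.
      apply Qn_plus; apply IHn; auto; apply Qn_mono; auto.
Qed.

Lemma Qn_scal n c a : Qn I n a -> Qn I n (fun t => c * a t)%C.
Proof. intros. apply Qn_mult; auto. apply Qn_const. Qed.

Lemma Qn_inv n : forall a, (forall t, I t -> a t <> RtoC 0) -> Qn I n a -> Qn I n (fun t => / a t)%C.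
Proof.
  induction n; intros a Hz Ha.
  - intros k Hk. assert (k = 0%nat) by lia. subst. simpl.
    apply P0_of_isdC with (da := fun t => (- derC a t / (a t * a t))%C).
    intros t Ht. apply isdC_inv; auto. apply P0_isdC with I; auto. apply (Ha 0%nat); lia.
  - destruct (Qn_S_inv _ _ _ Ha) as [Ha0 Ha1].
    apply Qn_S.
    + apply P0_of_isdC with (da := fun t => (- derC a t / (a t * a t))%C).
      intros t Ht. apply isdC_inv; auto. apply P0_isdC with I; auto.
    + apply Qn_ext with (fun t => (- RtoC 1) * derC a t * (/ a t * / a t))%C; auto.
      intros s Hs. symmetry. apply isdC_derC.
      replace (- RtoC 1 * derC a s * (/ a s * / a s))%C with (- derC a s / (a s * a s))%C.
      apply isdC_inv; auto. apply P0_isdC with I; auto.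
      field. auto.
      apply Qn_mult. apply Qn_scal; auto. apply Qn_mult; apply IHn; auto; apply Qn_mono; auto.
Qed.

Lemma Qn_cexpi n k : Qn I n (fun t => cexpi (k * t)).
Proof.
  induction n.
  - intros j Hj. assert (j = 0%nat) by lia. subst. simpl.
    apply P0_of_isdC with (da := fun t => (Ci * RtoC k * cexpi (k * t))%C). intros; apply isdC_cexpi.
  - apply Qn_S.
    + apply P0_of_isdC with (da := fun t => (Ci * RtoC k * cexpi (k * t))%C). intros; apply isdC_cexpi.
    + apply Qn_ext with (fun t => Ci * RtoC k * cexpi (k * t))%C; auto.
      intros s Hs. symmetry. apply isdC_derC, isdC_cexpi.
      apply Qn_scal; auto.
Qed.

Lemma Qn_of_deriv n a da : (forall t, I t -> isdC a t (da t)) -> Qn I n da -> Qn I (S n) a.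
Proof.
  intros H Hd. apply Qn_S. apply P0_of_isdC with da; auto.
  apply Qn_ext with da; auto. intros s Hs. symmetry. apply isdC_derC; auto.
Qed.

Lemma Qn_holo (G : nat -> C -> C) (D : C -> Prop) (w : R -> C) :
  (forall k z, D z -> cdiff (G k) z (G (S k) z)) ->
  (forall t, I t -> D (w t)) -> (forall n, Qn I n w) ->
  forall n k, Qn I n (fun t => G k (w t)).
Proof.
  intros HG HD Hw n. induction n; intros k.
  - intros j Hj. assert (j = 0%nat) by lia. subst. simpl.
    apply P0_of_isdC with (da := fun t => (G (S k) (w t) * derC w t)%C).
    intros t Ht. apply MIX. apply HG; auto. apply P0_isdC with I; auto. apply (Hw 0%nat 0%nat); lia.
  - apply Qn_of_deriv with (da := fun t => (G (S k) (w t) * derC w t)%C).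
    intros t Ht. apply MIX. apply HG; auto. apply P0_isdC with I; auto. apply (Hw 0%nat 0%nat); lia.
    apply Qn_mult; auto. destruct (Qn_S_inv _ _ _ (Hw (S n))); auto.
Qed.

End Closure.

Lemma smooth_of_Qn I a : (forall n, Qn I n a) -> smooth_R_on I a.
Proof. intros H n t Ht. apply (H n n); auto. Qed.

Lemma Qn_of_smooth I a : smooth_R_on I a -> forall n, Qn I n a.
Proof. intros H n k Hk t Ht. apply H; auto. Qed.

Lemma slice_u g z c : dirD_ex vu g (z, c) -> isdC (fun s => g (z, s)) c (dirD vu g (z, c)).
Proof.
  intros H.
  assert (E : forall s, dshift (z, 0) vu s = (z, s)).
  { intros s. unfold dshift, vu; simpl. apply pt_eq; ring. }
  pose proof (line_deriv g (z, 0) vu c) as L. rewrite E in L. specialize (L H).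
  eapply isdC_ext_loc. 2: exact L. apply filter_forall. intros s. rewrite E. auto.
Qed.

Lemma rdiffC_bound Z s0 dZ : isdC Z s0 dZ -> exists d : posreal, forall t, Rabs t < d ->
  Cmod (Z (s0 + t)%R - Z s0)%C <= (Cmod dZ + 1) * Rabs t.
Proof.
  intros H. apply isdC_rdiffC in H. destruct (H (mkposreal 1 Rlt_0_1)) as [d Hd].
  exists d. intros t Ht. specialize (Hd t Ht). simpl in Hd.
  replace (Z (s0 + t)%R - Z s0)%C with ((Z (s0 + t)%R - Z s0 - RtoC t * dZ) + RtoC t * dZ)%C by ring.
  eapply Rle_trans. apply Cmod_triangle. rewrite Cmod_mult, Cmod_R. nra.
Qed.

Lemma CHAIN3 U g Z s0 dZ : open_pt U -> smooth_on U g -> (forall q, U q -> CRp g q) ->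
  U (Z s0, s0) -> isdC Z s0 dZ ->
  isdC (fun s => g (Z s, s)) s0 (dirD vx g (Z s0, s0) * dZ + dirD vu g (Z s0, s0))%C.
Proof.
  intros HU Hg HCR Hq HZ.
  assert (HM : isdC (fun s => g (Z s, s0)) s0 (dirD vx g (Z s0, s0) * dZ)%C).
  { apply (MIX (fun w => g (w, s0)) Z s0). apply (HOLO U g (Z s0, s0)); auto. auto. }
  apply isdC_rdiffC in HM. apply isdC_rdiffC. intros eps.
  assert (Pe : 0 < eps / 2) by (pose proof (cond_pos eps); lra).
  assert (Pe4 : 0 < eps / 4) by (pose proof (cond_pos eps); lra).
  destruct (HM (mkposreal _ Pe)) as [d1 Hd1].
  destruct (HU _ Hq) as [e0 He0].
  destruct (proj1 (Hg (vu :: nil)) _ Hq (mkposreal _ Pe4)) as [dc Hdc]. simpl in Hdc.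
  destruct (rdiffC_bound Z s0 dZ HZ) as [d2 Hd2].
  set (m := Rmin e0 dc).
  assert (Pm : 0 < m) by (apply Rmin_pos; apply cond_pos).
  assert (Pm2 : 0 < m / (Cmod dZ + 1)) by (pose proof (Cmod_ge_0 dZ); apply Rdiv_lt_0_compat; lra).
  exists (mkposreal _ (Rmin_pos _ _ (Rmin_pos _ _ (cond_pos d1) (cond_pos d2)) Pm2)). simpl.
  intros t Ht.
  assert (Ht1 : Rabs t < d1) by (eapply Rlt_le_trans; [apply Ht|]; eapply Rle_trans; [apply Rmin_l|apply Rmin_l]).
  assert (Ht2 : Rabs t < d2) by (eapply Rlt_le_trans; [apply Ht|]; eapply Rle_trans; [apply Rmin_l|apply Rmin_r]).
  assert (Ht3 : Rabs t < m / (Cmod dZ + 1)) by (eapply Rlt_le_trans; [apply Ht|]; apply Rmin_r).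
  assert (HZt : Cmod (Z (s0 + t)%R - Z s0)%C < m).
  { eapply Rle_lt_trans. apply Hd2; auto. pose proof (Cmod_ge_0 dZ).
    apply Rmult_lt_reg_r with (/ (Cmod dZ + 1)). apply Rinv_0_lt_compat; lra.
    rewrite (Rmult_comm (Cmod dZ + 1)), Rmult_assoc, Rinv_r, Rmult_1_r by lra. exact Ht3. }
  assert (Htm : Rabs t < m).
  { pose proof (Cmod_ge_0 dZ). eapply Rlt_le_trans. apply Ht3.
    apply Rmult_le_reg_r with (Cmod dZ + 1). lra. unfold Rdiv. rewrite Rmult_assoc, Rinv_l by lra. nra. }
  assert (Hm1 : m <= e0) by apply Rmin_l. assert (Hm2 : m <= dc) by apply Rmin_r.
  set (z' := Z (s0 + t)%R) in *.
  assert (S1 : Cmod (g (z', (s0 + t)%R) - g (z', s0) - RtoC t * dirD vu g (Z s0, s0))%C <= 2 * (eps / 4) * Rabs t).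
  { apply (MVI (fun s => g (z', s)) (fun s => dirD vu g (z', s))).
    intros c Hc.
    assert (HUc : U (z', c)) by (apply He0; simpl; lra).
    split. apply slice_u. apply (proj2 (Hg nil)); auto.
    left. apply Hdc; simpl; lra. }
  specialize (Hd1 t Ht1). simpl in Hd1. fold z' in Hd1.
  replace (g (z', (s0 + t)%R) - g (Z s0, s0) -
      RtoC t * (dirD vx g (Z s0, s0) * dZ + dirD vu g (Z s0, s0)))%C with
    ((g (z', (s0 + t)%R) - g (z', s0) - RtoC t * dirD vu g (Z s0, s0)) +
     (g (z', s0) - g (Z s0, s0) - RtoC t * (dirD vx g (Z s0, s0) * dZ)))%C by ring.
  eapply Rle_trans. apply Cmod_triangle. lra.
Qed.

Lemma cexpi_add a b : (cexpi a * cexpi b)%C = cexpi (a + b).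
Proof. unfold cexpi. apply injective_projections; simpl; rewrite ?cos_plus, ?sin_plus; ring. Qed.

Lemma cexpi_0 : cexpi 0 = RtoC 1.
Proof. unfold cexpi. rewrite cos_0, sin_0. reflexivity. Qed.

Lemma Cmod_cexpi a : Cmod (cexpi a) = 1.
Proof. unfold cexpi, Cmod; simpl. rewrite !Rmult_1_r. pose proof (sin2_cos2 a). unfold Rsqr in H. replace (cos a * cos a + sin a * sin a) with 1 by lra. apply sqrt_1. Qed.

Lemma cexpi_nz a : cexpi a <> RtoC 0.
Proof. intros H. pose proof (Cmod_cexpi a). rewrite H, Cmod_0 in H0. lra. Qed.

Lemma cexpi_bound x : Cmod (cexpi x - RtoC 1)%C <= 2 * Rabs x.
Proof.
  pose proof (MVI (fun s => cexpi (1 * s)) (fun s => Ci * RtoC 1 * cexpi (1 * s))%C (RtoC 0) 1 0 x) as M.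
  rewrite Rplus_0_l, Rmult_0_r, cexpi_0, Rmult_1_l in M.
  replace (cexpi x - RtoC 1 - RtoC x * RtoC 0)%C with (cexpi x - RtoC 1)%C in M by ring.
  rewrite Rmult_1_r in M. apply M.
  intros c _. split. apply isdC_cexpi.
  replace (Ci * RtoC 1 * cexpi (1 * c) - RtoC 0)%C with (Ci * cexpi (1 * c))%C by ring.
  rewrite Cmod_mult, Cmod_cexpi, Cmod_Ci. lra.
Qed.

Lemma Qn_slice U z I n : open_R I -> forall g, smooth_on U g -> (forall t, I t -> U (z, t)) ->
  Qn I n (fun t => g (z, t)).
Proof.
  intros HI. induction n; intros g Hg HzI.
  - intros k Hk. assert (k = 0%nat) by lia. subst. simpl.
    apply P0_of_isdC with (da := fun t => dirD vu g (z, t)).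
    intros t Ht. apply slice_u. apply (proj2 (Hg nil)); auto.
  - apply Qn_of_deriv with (da := fun t => dirD vu g (z, t)); auto.
    intros t Ht. apply slice_u. apply (proj2 (Hg nil)); auto.
    apply (IHn (dirD vu g)); auto. apply (smooth_iterD U g (vu :: nil)); auto.
Qed.

Section Common.
Variable U : pt -> Prop.
Variable f : pt -> C.
Hypothesis HU : open_pt U.
Hypothesis Hs : smooth_on U f.
Hypothesis Hh : holo_in_zeta_on U f.

Definition g1 := iterD (vx :: nil) f.
Definition g2 := iterD (vx :: vx :: nil) f.
Definition g3 := iterD (vx :: vx :: vx :: nil) f.
Definition g4 := iterD (vx :: vx :: vx :: vx :: nil) f.
Definition g2u := iterD (vu :: vx :: vx :: nil) f.
Definition g2ux := iterD (vx :: vu :: vx :: vx :: nil) f.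

Lemma Dz1 q : U q -> Dz f q = g1 q.
Proof. intros Hq. apply (Dz_iter U f HU Hs Hh f nil); auto. Qed.

Lemma Dz2 q : U q -> Dz (Dz f) q = g2 q.
Proof. intros Hq. apply (Dz_iter U f HU Hs Hh (Dz f) (vx :: nil)); auto. apply Dz1. Qed.

Lemma Dz3 q : U q -> Dz (Dz (Dz f)) q = g3 q.
Proof. intros Hq. apply (Dz_iter U f HU Hs Hh (Dz (Dz f)) (vx :: vx :: nil)); auto. apply Dz2. Qed.

Lemma Du2 q : U q -> Du (Dz (Dz f)) q = g2u q.
Proof. intros Hq. unfold Du, g2u. simpl. apply dirD_ext_loc with U; auto. apply Dz2. Qed.

Lemma phi_eq q : U q -> phi_of f q = (g3 q / g2 q)%C.
Proof. intros Hq. unfold phi_of. rewrite Dz3, Dz2; auto. Qed.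

Lemma psi_eq q : U q -> psi_of f q = (g2u q / g2 q)%C.
Proof. intros Hq. unfold psi_of. rewrite Du2, Dz2; auto. Qed.

Lemma H_iter vs q : U q -> cdiff (fun w => iterD vs f (w, snd q)) (fst q) (iterD (vx :: vs) f q).
Proof. intros; apply HOLO_iter with U; auto. Qed.

Lemma near_U q : U q -> exists r : posreal, forall w, Cmod (w - fst q)%C < r -> U (w, snd q).
Proof. intros; apply U_near; auto. Qed.

End Common.

Section Forward.
Variable lambda : R.
Variable U : pt -> Prop.
Variable f : pt -> C.
Hypothesis HU : open_pt U.
Hypothesis Hs : smooth_on U f.
Hypothesis Hh : holo_in_zeta_on U f.
Hypothesis H2nz : forall p, U p -> Dz (Dz f) p <> RtoC 0.
Hypothesis H3nz : forall p, U p -> Dz (Dz (Dz f)) p <> RtoC 0.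
Hypothesis Heq : forall p, U p ->
      Dz (fun q => (psi_of f q / phi_of f q)%C) p =
      (Ci * RtoC lambda * (Dz (fun q => (RtoC 2 / phi_of f q)%C) p + RtoC 1))%C.

Lemma g2nz q : U q -> g2 f q <> RtoC 0.
Proof. intros Hq. rewrite <- (Dz2 U f HU Hs Hh q Hq). auto. Qed.
Lemma g3nz q : U q -> g3 f q <> RtoC 0.
Proof. intros Hq. rewrite <- (Dz3 U f HU Hs Hh q Hq). auto. Qed.

Definition cl := (Ci * RtoC lambda)%C.

Definition E (q : pt) : C := ((g2u f q - RtoC 2 * cl * g2 f q) / g3 f q - cl * fst q)%C.

Lemma E_deriv q : U q -> cdiff (fun w => E (w, snd q)) (fst q) (RtoC 0).
Proof.
  intros Hq. destruct (near_U U HU q Hq) as [r Hr].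
  destruct q as [z u]. simpl in *.
  pose proof (H_iter U f HU Hs Hh (vu :: vx :: vx :: nil) (z, u) Hq) as Hu. simpl in Hu.
  pose proof (H_iter U f HU Hs Hh (vx :: vx :: nil) (z, u) Hq) as Hg2. simpl in Hg2.
  pose proof (H_iter U f HU Hs Hh (vx :: vx :: vx :: nil) (z, u) Hq) as Hg3. simpl in Hg3.
  pose proof (g2nz (z,u) Hq) as N2. pose proof (g3nz (z,u) Hq) as N3.
  unfold g2, g3, g2u in N2, N3. simpl in N2, N3.
  set (A := dirD vu (dirD vx (dirD vx f)) (z, u)) in *.
  set (B := dirD vx (dirD vx f) (z, u)) in *.
  set (Cc := dirD vx (dirD vx (dirD vx f)) (z, u)) in *.
  set (A' := dirD vx (dirD vu (dirD vx (dirD vx f))) (z, u)) in *.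
  set (Cc' := dirD vx (dirD vx (dirD vx (dirD vx f))) (z, u)) in *.
  pose proof (Heq (z, u) Hq) as HE.
  assert (L1 : Dz (fun q => (psi_of f q / phi_of f q)%C) (z, u) = ((A' * Cc - A * Cc') / (Cc * Cc))%C).
  { unfold Dz. simpl. apply cdiff_C_derive.
    apply cdiff_ext_loc with (F := fun w => (dirD vu (dirD vx (dirD vx f)) (w, u) / dirD vx (dirD vx (dirD vx f)) (w, u))%C).
    exists r. intros w Hw. specialize (Hr w Hw).
    rewrite (phi_eq U f HU Hs Hh _ Hr), (psi_eq U f HU Hs Hh _ Hr).
    pose proof (g2nz _ Hr). pose proof (g3nz _ Hr). unfold g2, g3, g2u in *. simpl in *. field. auto.
    apply cdiff_div; auto. }
  assert (L2 : Dz (fun q => (RtoC 2 / phi_of f q)%C) (z, u) = ((RtoC 2 * Cc * Cc - RtoC 2 * B * Cc') / (Cc * Cc))%C).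
  { unfold Dz. simpl. apply cdiff_C_derive.
    apply cdiff_ext_loc with (F := fun w => (RtoC 2 * dirD vx (dirD vx f) (w, u) / dirD vx (dirD vx (dirD vx f)) (w, u))%C).
    exists r. intros w Hw. specialize (Hr w Hw).
    rewrite (phi_eq U f HU Hs Hh _ Hr).
    pose proof (g2nz _ Hr). pose proof (g3nz _ Hr). unfold g2, g3, g2u in *. simpl in *. field. auto.
    pose proof (cdiff_div _ _ _ _ _ (cdiff_scal (RtoC 2) _ _ _ Hg2) Hg3 N3) as K. cbv beta in K.
    replace ((RtoC 2 * Cc * Cc - RtoC 2 * B * Cc') / (Cc * Cc))%C with
      ((RtoC 2 * Cc * Cc - RtoC 2 * B * Cc') / (Cc * Cc))%C by reflexivity.
    replace ((RtoC 2 * Cc * Cc - RtoC 2 * B * Cc') / (Cc * Cc))%C with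
       ((RtoC 2 * Cc * Cc - RtoC 2 * B * Cc') / (Cc * Cc))%C in K by reflexivity.
    exact K. }
  rewrite L1, L2 in HE.
  apply cdiff_ext_loc with (F := fun w => ((dirD vu (dirD vx (dirD vx f)) (w, u) - RtoC 2 * cl * dirD vx (dirD vx f) (w, u)) / dirD vx (dirD vx (dirD vx f)) (w, u) - cl * w)%C).
  exists r. intros w Hw. unfold E, g2, g3, g2u. simpl. reflexivity.
  pose proof (cdiff_minus _ _ _ _ _ (cdiff_div _ _ _ _ _ (cdiff_minus _ _ _ _ _ Hu (cdiff_scal (RtoC 2 * cl) _ _ _ Hg2)) Hg3 N3)
     (cdiff_scal cl _ _ _ (cdiff_id z))) as K. cbv beta in K.
  match type of K with cdiff _ _ ?D => replace D with (RtoC 0) in K end. exact K.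
  unfold cl in *.
  match goal with |- _ = ?D => transitivity (((A' * Cc - A * Cc') / (Cc * Cc)) - Ci * RtoC lambda * ((RtoC 2 * Cc * Cc - RtoC 2 * B * Cc') / (Cc * Cc) + RtoC 1))%C end.
  rewrite HE. ring.
  change (dirD vx (dirD vx (dirD vx f)) (z, u)) with Cc. change (dirD vu (dirD vx (dirD vx f)) (z, u)) with A. change (dirD vx (dirD vx f) (z, u)) with B. match goal with |- ?X = ?Y => assert (HH : (X = Y :> C)); [field; auto | exact HH] end.
Qed.



Variable z0 : C.
Variable u0 : R.
Variable r0 : posreal.
Hypothesis Hr0 : forall z u, Cmod (z - z0)%C < r0 -> Rabs (u - u0) < r0 -> U (z, u).

Lemma E_const z s : Cmod (z - z0)%C < r0 -> Rabs (s - u0) < r0 -> E (z, s) = E (z0, s).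
Proof.
  intros Hz Hs1.
  apply (CONST (fun w => E (w, s)) z0 r0); auto.
  intros w Hw. apply (E_deriv (w, s)). apply Hr0; auto.
Qed.

Definition cc (s : R) : C := E (z0, s).

Lemma E1 z s : Cmod (z - z0)%C < r0 -> Rabs (s - u0) < r0 ->
  (g2u f (z, s) - RtoC 2 * cl * g2 f (z, s) = (cc s + cl * z) * g3 f (z, s))%C.
Proof.
  intros Hz Hs1. pose proof (E_const z s Hz Hs1) as HE. unfold cc. rewrite <- HE.
  unfold E. simpl. pose proof (g3nz (z, s) (Hr0 _ _ Hz Hs1)). field. auto.
Qed.

Definition I0 (s : R) : Prop := Rabs (s - u0) < r0.

Lemma I0_open : open_R I0.
Proof.
  intros t Ht. unfold I0 in *. assert (P : 0 < r0 - Rabs (t - u0)) by lra.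
  exists (mkposreal _ P). simpl. intros s Hs2.
  replace (s - u0) with ((s - t) + (t - u0)) by ring.
  eapply Rle_lt_trans. apply Rabs_triang. lra.
Qed.

Lemma z0_in : Cmod (z0 - z0)%C < r0.
Proof. replace (z0 - z0)%C with (RtoC 0) by ring. rewrite Cmod_0. apply cond_pos. Qed.

Lemma cc_Qn n : Qn I0 n cc.
Proof.
  assert (HI := I0_open).
  assert (Hz : forall t, I0 t -> U (z0, t)) by (intros t Ht; apply Hr0; auto; apply z0_in).
  apply Qn_ext with (fun s => (g2u f (z0, s) + (- (RtoC 2 * cl)) * g2 f (z0, s)) * / g3 f (z0, s) + (- (cl * z0)))%C; auto.
  intros s Hs2. unfold cc, E. simpl. unfold Cdiv, Cminus. ring.
  apply Qn_plus; auto. apply Qn_mult; auto. apply Qn_plus; auto.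
  apply Qn_slice with U; auto. apply smooth_iterD; auto.
  apply Qn_scal; auto. apply Qn_slice with U; auto. apply smooth_iterD; auto.
  apply Qn_inv; auto. intros t Ht. apply g3nz; auto.
  apply Qn_slice with U; auto. apply smooth_iterD; auto.
  apply Qn_const; auto.
Qed.

Definition ce (s : R) : C := (cc s * cexpi (lambda * s))%C.

Lemma ce_Qn n : Qn I0 n ce.
Proof. apply Qn_mult. apply I0_open. apply cc_Qn. apply Qn_cexpi. apply I0_open. Qed.

Definition hh (s : R) : C :=
  (- RInt (fun t => Re (ce t)) u0 s, - RInt (fun t => Im (ce t)) u0 s).

Lemma I0_convex a b t : I0 a -> I0 b -> Rmin a b <= t <= Rmax a b -> I0 t.
Proof.
  unfold I0. intros Ha Hb Ht. unfold Rmin, Rmax in Ht.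
  destruct (Rle_dec a b); apply Rabs_lt_between' in Ha; apply Rabs_lt_between' in Hb;
  apply Rabs_lt_between'; lra.
Qed.

Lemma I0_u0 : I0 u0.
Proof. unfold I0. rewrite Rminus_eq_0, Rabs_R0. apply cond_pos. Qed.

Lemma hh_deriv s : I0 s -> isdC hh s (- ce s)%C.
Proof.
  intros Hs1.
  assert (P0c : P0 I0 ce) by (apply (ce_Qn 0 0%nat); lia).
  assert (Cr : forall t, I0 t -> continuous (fun t => Re (ce t)) t).
  { intros t Ht. apply (@ex_derive_continuous R_AbsRing R_NormedModule). apply P0c; auto. }
  assert (Ci' : forall t, I0 t -> continuous (fun t => Im (ce t)) t).
  { intros t Ht. apply (@ex_derive_continuous R_AbsRing R_NormedModule). apply P0c; auto. }
  split.
  - eapply is_derive_ext with (f := fun s => - RInt (fun t => Re (ce t)) u0 s). intros; reflexivity.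
    rewrite re_opp.
    apply Rd_opp. apply (is_derive_RInt (fun t => Re (ce t)) (fun b => RInt (fun t => Re (ce t)) u0 b) u0 s).
    + eapply filter_imp. 2: apply (open_R_loc I0 s I0_open Hs1). intros b Hb. apply (@RInt_correct R_CompleteNormedModule).
      apply (@ex_RInt_continuous R_CompleteNormedModule). intros z Hz. apply Cr. apply (I0_convex u0 b); auto. apply I0_u0.
    + apply Cr; auto.
  - eapply is_derive_ext with (f := fun s => - RInt (fun t => Im (ce t)) u0 s). intros; reflexivity.
    rewrite im_opp.
    apply Rd_opp. apply (is_derive_RInt (fun t => Im (ce t)) (fun b => RInt (fun t => Im (ce t)) u0 b) u0 s).
    + eapply filter_imp. 2: apply (open_R_loc I0 s I0_open Hs1). intros b Hb. apply (@RInt_correct R_CompleteNormedModule).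
      apply (@ex_RInt_continuous R_CompleteNormedModule). intros z Hz. apply Ci'. apply (I0_convex u0 b); auto. apply I0_u0.
    + apply Ci'; auto.
Qed.

Lemma hh_u0 : hh u0 = RtoC 0.
Proof. unfold hh. rewrite !RInt_point. unfold zero; simpl. apply injective_projections; simpl; ring. Qed.

Lemma hh_Qn n : Qn I0 n hh.
Proof.
  destruct n. 
  - intros k Hk. assert (k = 0%nat) by lia. subst. simpl.
    apply P0_of_isdC with (da := fun s => (- ce s)%C). apply hh_deriv.
  - apply Qn_of_deriv with (da := fun s => (- ce s)%C). apply I0_open. apply hh_deriv.
    apply Qn_ext with (fun s => (- RtoC 1) * ce s)%C. apply I0_open. intros; ring.
    apply Qn_scal. apply I0_open. apply ce_Qn.
Qed.



Lemma cexpi_inv x : (cexpi (lambda * x) * cexpi ((- lambda) * x))%C = RtoC 1.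
Proof. rewrite cexpi_add. replace (lambda * x + - lambda * x) with 0 by ring. apply cexpi_0. Qed.

Definition Zs (z : C) (u s : R) : C := ((z * cexpi (lambda * u) - hh u + hh s) * cexpi ((- lambda) * s))%C.

Lemma Zs_u z u : Zs z u u = z.
Proof.
  unfold Zs. replace (z * cexpi (lambda * u) - hh u + hh u)%C with (z * cexpi (lambda * u))%C by ring.
  rewrite <- Cmult_assoc, cexpi_inv. ring.
Qed.

Lemma Zs_u0 z u : Zs z u u0 = ((z * cexpi (lambda * u) - hh u) * cexpi ((- lambda) * u0))%C.
Proof. unfold Zs. rewrite hh_u0. f_equal. ring. Qed.

Lemma Zs_deriv z u s : I0 s -> isdC (Zs z u) s
  (((RtoC 0 + - ce s) * cexpi ((- lambda) * s) +
    (z * cexpi (lambda * u) - hh u + hh s) * (Ci * RtoC (- lambda) * cexpi ((- lambda) * s))))%C.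
Proof.
  intros Hs1. unfold Zs.
  pose proof (isdC_plus (fun _ => (z * cexpi (lambda * u) - hh u)%C) hh s _ _ (isdC_const _ s) (hh_deriv s Hs1)) as H1.
  pose proof (isdC_mult _ _ s _ _ H1 (isdC_cexpi (- lambda) s)) as H2.
  exact H2.
Qed.

Lemma M_deriv z u c : I0 c -> Cmod (Zs z u c - z0)%C < r0 ->
  isdC (fun s => cexpi ((- (2 * lambda)) * s) * g2 f (Zs z u s, s))%C c (RtoC 0).
Proof.
  intros Hc HZ.
  assert (HUc : U (Zs z u c, c)) by (apply Hr0; auto).
  assert (HCR : forall q, U q -> CRp (g2 f) q) by (intros; apply (CR_iter U f); auto).
  pose proof (CHAIN3 U (g2 f) (Zs z u) c _ HU (smooth_iterD U f _ Hs) HCR HUc (Zs_deriv z u c Hc)) as H3.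
  pose proof (isdC_mult _ _ c _ _ (isdC_cexpi (- (2 * lambda)) c) H3) as HM.
  cbv beta in HM.
  match type of HM with isdC _ _ ?D => replace D with (RtoC 0) in HM end. exact HM.
  change (dirD vx (g2 f) (Zs z u c, c)) with (g3 f (Zs z u c, c)).
  change (dirD vu (g2 f) (Zs z u c, c)) with (g2u f (Zs z u c, c)).
  pose proof (E1 (Zs z u c) c HZ Hc) as HE.
  assert (Hg2u : g2u f (Zs z u c, c) = (RtoC 2 * cl * g2 f (Zs z u c, c) + (cc c + cl * Zs z u c) * g3 f (Zs z u c, c))%C).
  { rewrite <- HE. ring. }
  rewrite Hg2u. unfold ce, cl. unfold Zs.
  set (em := cexpi (- lambda * c)). set (ep := cexpi (lambda * c)).
  assert (Hpm : (ep * em)%C = RtoC 1) by apply cexpi_inv.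
  rewrite !RtoC_opp, !RtoC_mult.
  set (W := (z * cexpi (lambda * u) - hh u + hh c)%C).
  set (G2 := g2 f ((W * em)%C, c)). set (G3 := g3 f ((W * em)%C, c)).
  set (e2 := cexpi (- (2 * lambda) * c)).
  match goal with |- ?A = ?B => assert (HH : (B = RtoC 0 :> C)); [ | exact (eq_sym HH)] end.
  transitivity (e2 * G3 * cc c * (RtoC 1 - ep * em))%C. ring. rewrite Hpm. ring.
Qed.

Lemma M_const z u : Rabs (u - u0) < r0 ->
  (forall s, Rabs (s - u0) <= Rabs (u - u0) -> Cmod (Zs z u s - z0)%C < r0) ->
  (cexpi ((- (2 * lambda)) * u) * g2 f (z, u) = cexpi ((- (2 * lambda)) * u0) * g2 f (Zs z u u0, u0))%C.
Proof.
  intros Hu Hp.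
  pose proof (MVI (fun s => cexpi ((- (2 * lambda)) * s) * g2 f (Zs z u s, s))%C (fun _ => RtoC 0) (RtoC 0) 0 u0 (u - u0)) as M.
  cbv beta in M. replace (u0 + (u - u0)) with u in M by ring. rewrite Zs_u in M.
  assert (Cmod (cexpi (- (2 * lambda) * u) * g2 f (z, u) - cexpi (- (2 * lambda) * u0) * g2 f (Zs z u u0, u0) -
      RtoC (u - u0) * RtoC 0)%C = 0).
  { apply Rle_antisym. 2: apply Cmod_ge_0. eapply Rle_trans. apply M.
    intros c Hc. split. apply M_deriv. unfold I0. lra. apply Hp; auto.
    replace (RtoC 0 - RtoC 0)%C with (RtoC 0) by ring. rewrite Cmod_0. lra. right; ring. }
  apply Cmod_eq_0 in H.
  match goal with |- ?A = ?B => replace A with ((A - B - RtoC (u - u0) * RtoC 0) + B)%C by ring end.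
  rewrite H. ring.
Qed.



Definition a0 : C := cexpi ((- lambda) * u0).
Definition GG (k : nat) (w : C) : C := (Cpow a0 k * iterD (repeat vx k) f ((w * a0)%C, u0))%C.
Definition DD (w : C) : Prop := Cmod (w * a0 - z0)%C < r0.

Lemma DD_U w : DD w -> U ((w * a0)%C, u0).
Proof. intros H. apply Hr0; auto. rewrite Rminus_eq_0, Rabs_R0. apply cond_pos. Qed.

Lemma GG_deriv k w : DD w -> cdiff (GG k) w (GG (S k) w).
Proof.
  intros Hw. unfold GG.
  pose proof (H_iter U f HU Hs Hh (repeat vx k) ((w * a0)%C, u0) (DD_U w Hw)) as H. simpl in H.
  assert (Hl : cdiff (fun w => (w * a0)%C) w a0).
  { pose proof (cdiff_mult _ _ _ _ _ (cdiff_id w) (cdiff_const a0 w)) as K. cbv beta in K.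
    assert (E : (RtoC 1 * a0 + w * RtoC 0)%C = a0) by ring. rewrite E in K. exact K. }
  pose proof (cdiff_comp (fun v => iterD (repeat vx k) f (v, u0)) (fun w => (w * a0)%C) w _ _ Hl H) as K.
  pose proof (cdiff_scal (Cpow a0 k) _ _ _ K) as K2. cbv beta in K2.
  replace (Cpow a0 (S k) * iterD (repeat vx (S k)) f ((w * a0)%C, u0))%C with
    (Cpow a0 k * (iterD (vx :: repeat vx k) f ((w * a0)%C, u0) * a0))%C.
  exact K2. simpl. ring.
Qed.

Lemma DD_open : open_C DD.
Proof.
  intros w Hw. unfold DD in *. assert (P : 0 < r0 - Cmod (w * a0 - z0)%C) by lra.
  exists (mkposreal _ P). simpl. intros v Hv.
  replace (v * a0 - z0)%C with ((v - w) * a0 + (w * a0 - z0))%C by ring.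
  eapply Rle_lt_trans. apply Cmod_triangle. rewrite Cmod_mult. assert (Ha : Cmod a0 = 1) by (unfold a0; apply Cmod_cexpi). rewrite Ha. lra.
Qed.

Lemma C_derive_GG k (H : C -> C) : (forall w, DD w -> H w = GG k w) ->
  forall w, DD w -> C_derive H w = GG (S k) w.
Proof.
  intros HE w Hw. apply cdiff_C_derive.
  apply cdiff_ext_loc with (F := GG k).
  destruct (DD_open w Hw) as [e He]. exists e. intros v Hv. symmetry. apply HE, He; auto.
  apply GG_deriv; auto.
Qed.

Lemma F_diff w : DD w -> C_diff (GG 0) w.
Proof. intros Hw. apply cdiff_C_diff with (GG 1 w). apply GG_deriv; auto. Qed.

Lemma F_d3 w : DD w -> C_derive (C_derive (C_derive (GG 0))) w <> RtoC 0.
Proof.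
  intros Hw.
  assert (E1' : forall v, DD v -> C_derive (GG 0) v = GG 1 v) by (apply C_derive_GG; auto).
  assert (E2' : forall v, DD v -> C_derive (C_derive (GG 0)) v = GG 2 v) by (apply C_derive_GG; auto).
  rewrite (C_derive_GG 2 _ E2' w Hw). unfold GG.
  apply Cmult_neq_0. apply Cpow_nz. unfold a0. apply cexpi_nz.
  apply (g3nz ((w * a0)%C, u0)). apply DD_U; auto.
Qed.

Definition Wf (z : C) (u : R) : C := (z * cexpi (lambda * u) - hh u)%C.

Lemma Wf_DD z u : Cmod (Zs z u u0 - z0)%C < r0 -> DD (Wf z u).
Proof. intros H. unfold DD, Wf, a0. rewrite <- Zs_u0. auto. Qed.

Definition A1 (u : R) : C := (g1 f (z0, u) - GG 1 (Wf z0 u) * cexpi (lambda * u))%C.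
Definition A0 (u : R) : C := (f (z0, u) - GG 0 (Wf z0 u) - A1 u * z0)%C.

Lemma K_rep u e1 : Rabs (u - u0) < r0 -> e1 <= r0 ->
  (forall z, Cmod (z - z0)%C < e1 -> forall s, Rabs (s - u0) <= Rabs (u - u0) -> Cmod (Zs z u s - z0)%C < r0) ->
  forall z, Cmod (z - z0)%C < e1 -> f (z, u) = (GG 0 (Wf z u) + A1 u * z + A0 u)%C.
Proof.
  intros Hu He1 Hp.
  set (ep := cexpi (lambda * u)).
  assert (HUz : forall z, Cmod (z - z0)%C < e1 -> U (z, u)) by (intros; apply Hr0; lra).
  assert (HDz : forall z, Cmod (z - z0)%C < e1 -> DD (Wf z u)).
  { intros z Hz. apply Wf_DD. apply Hp; auto. rewrite Rminus_eq_0, Rabs_R0. apply Rabs_pos. }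
  assert (HW : forall z, cdiff (fun v => Wf v u) z ep).
  { intros z. unfold Wf.
    pose proof (cdiff_minus _ _ _ _ _ (cdiff_mult _ _ _ _ _ (cdiff_id z) (cdiff_const ep z)) (cdiff_const (hh u) z)) as K.
    cbv beta in K. assert (E : (RtoC 1 * ep + z * RtoC 0 - RtoC 0)%C = ep) by ring. rewrite E in K. exact K. }
  set (Kp := fun z => (g1 f (z, u) - GG 1 (Wf z u) * ep)%C).
  assert (HK : forall z, Cmod (z - z0)%C < e1 -> cdiff (fun v => f (v, u) - GG 0 (Wf v u))%C z (Kp z)).
  { intros z Hz. pose proof (H_iter U f HU Hs Hh nil (z, u) (HUz z Hz)) as H0. simpl in H0.
    pose proof (cdiff_comp (GG 0) (fun v => Wf v u) z _ _ (HW z) (GG_deriv 0 _ (HDz z Hz))) as H1.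
    pose proof (cdiff_minus _ _ _ _ _ H0 H1) as K. exact K. }
  assert (HKp : forall z, Cmod (z - z0)%C < e1 -> cdiff Kp z (RtoC 0)).
  { intros z Hz. unfold Kp.
    pose proof (H_iter U f HU Hs Hh (vx :: nil) (z, u) (HUz z Hz)) as H0. simpl in H0.
    pose proof (cdiff_comp (GG 1) (fun v => Wf v u) z _ _ (HW z) (GG_deriv 1 _ (HDz z Hz))) as H1.
    pose proof (cdiff_minus _ _ _ _ _ H0 (cdiff_mult _ _ _ _ _ H1 (cdiff_const ep z))) as K. cbv beta in K.
    match type of K with cdiff _ _ ?D => replace D with (RtoC 0) in K end. exact K.
    pose proof (M_const z u Hu (Hp z Hz)) as HM.
    rewrite Zs_u0 in HM. fold ep in HM. fold a0 in HM.
    unfold GG, Wf. simpl. fold ep. change (dirD vx (dirD vx f)) with (g2 f).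
    change (dirD vx (dirD vx f) (z, u)) with (g2 f (z, u)).
    assert (Hinv2 : (cexpi (- (2 * lambda) * u) * (ep * ep))%C = RtoC 1).
    { unfold ep. rewrite !cexpi_add. replace (- (2 * lambda) * u + (lambda * u + lambda * u)) with 0 by ring. apply cexpi_0. }
    assert (Ha2 : cexpi (- (2 * lambda) * u0) = (a0 * (a0 * RtoC 1))%C).
    { unfold a0. rewrite Cmult_1_r, cexpi_add. f_equal. ring. }
    rewrite Ha2 in HM.
    match goal with |- ?A = ?B => assert (HH : (B = RtoC 0 :> C)); [ | exact (eq_sym HH)] end.
    transitivity ((ep * ep) * (cexpi (- (2 * lambda) * u) * g2 f (z, u)) - ep * ep * (a0 * (a0 * RtoC 1) *
       g2 f (((z * ep - hh u) * a0)%C, u0)))%C.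
    2: { rewrite HM. ring. }
    replace ((ep * ep) * (cexpi (- (2 * lambda) * u) * g2 f (z, u)))%C with
      ((cexpi (- (2 * lambda) * u) * (ep * ep)) * g2 f (z, u))%C by ring.
    rewrite Hinv2. ring. }
  assert (HA1 : forall z, Cmod (z - z0)%C < e1 -> Kp z = A1 u).
  { intros z Hz. unfold A1. fold ep. change (Kp z = Kp z0). apply (CONST Kp z0 e1); auto. }
  assert (HL : forall z, Cmod (z - z0)%C < e1 ->
     (f (z, u) - GG 0 (Wf z u) - A1 u * z = f (z0, u) - GG 0 (Wf z0 u) - A1 u * z0)%C).
  { intros z Hz. apply (CONST (fun v => f (v, u) - GG 0 (Wf v u) - A1 u * v)%C z0 e1); auto.
    intros v Hv. pose proof (cdiff_minus _ _ _ _ _ (HK v Hv) (cdiff_scal (A1 u) _ _ _ (cdiff_id v))) as K.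
    cbv beta in K. rewrite HA1 in K by auto. replace (A1 u - A1 u * RtoC 1)%C with (RtoC 0) in K by ring. exact K. }
  intros z Hz. unfold A0. rewrite <- (HL z Hz). ring.
Qed.



Lemma Qn_restrict (I1 I2 : R -> Prop) n a : (forall t, I2 t -> I1 t) -> Qn I1 n a -> Qn I2 n a.
Proof. intros H Ha k Hk t Ht. apply Ha; auto. Qed.

Lemma open_ball_R c (r : R) : open_R (fun t => Rabs (t - c) < r).
Proof.
  intros t Ht. assert (P : 0 < r - Rabs (t - c)) by lra.
  exists (mkposreal _ P). simpl. intros s Hs2.
  replace (s - c) with ((s - t) + (t - c)) by ring.
  eapply Rle_lt_trans. apply Rabs_triang. lra.
Qed.

Lemma path_bound e1 : 0 < e1 -> e1 <= r0 / 4 -> 4 * Rabs lambda * (Cmod z0 + r0) * e1 <= r0 / 4 ->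
  (forall t, Rabs (t - u0) < e1 -> Cmod (hh t) < r0 / 8) ->
  forall z u, Cmod (z - z0)%C < e1 -> Rabs (u - u0) < e1 ->
  forall s, Rabs (s - u0) <= Rabs (u - u0) -> Cmod (Zs z u s - z0)%C < r0.
Proof.
  intros He1 He2 He3 Hh8 z u Hz Hu s Hs2.
  assert (Id : (Zs z u s - z0 = (z - z0) + z * (cexpi (lambda * u + - lambda * s) - RtoC 1)
       + (hh s - hh u) * cexpi (- lambda * s))%C).
  { unfold Zs. rewrite <- cexpi_add. ring. }
  rewrite Id.
  assert (B1 : Cmod (z * (cexpi (lambda * u + - lambda * s) - RtoC 1))%C <= (Cmod z0 + r0) * (4 * Rabs lambda * e1)).
  { rewrite Cmod_mult. apply Rmult_le_compat. apply Cmod_ge_0. apply Cmod_ge_0.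
    - replace z with ((z - z0) + z0)%C by ring. eapply Rle_trans. apply Cmod_triangle.
      pose proof (cond_pos r0). lra.
    - eapply Rle_trans. apply cexpi_bound.
      replace (lambda * u + - lambda * s) with (lambda * ((u - u0) - (s - u0))) by ring.
      rewrite Rabs_mult. pose proof (Rabs_pos lambda).
      assert (Rabs ((u - u0) - (s - u0)) <= 2 * e1).
      { eapply Rle_trans. apply Rabs_triang. rewrite Rabs_Ropp. lra. }
      nra. }
  assert (B2 : Cmod ((hh s - hh u) * cexpi (- lambda * s))%C < r0 / 4).
  { rewrite Cmod_mult, Cmod_cexpi, Rmult_1_r.
    unfold Cminus. eapply Rle_lt_trans. apply Cmod_triangle. rewrite Cmod_opp.
    assert (Cmod (hh s) < r0 / 8) by (apply Hh8; lra).
    assert (Cmod (hh u) < r0 / 8) by (apply Hh8; lra). lra. }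
  eapply Rle_lt_trans. apply Cmod_triangle.
  eapply Rle_lt_trans. apply Rplus_le_compat_r. apply Cmod_triangle.
  pose proof (cond_pos r0). nra.
Qed.

Lemma forward_at : U (z0, u0) ->
      exists (F : C -> C) (D : C -> Prop) (h A1 A0 : R -> C) (I : R -> Prop) (e : posreal),
        open_C D /\ (forall w, D w -> C_diff F w) /\
        (forall w, D w -> C_derive (C_derive (C_derive F)) w <> RtoC 0) /\
        open_R I /\ smooth_R_on I h /\ smooth_R_on I A1 /\ smooth_R_on I A0 /\
        (forall (z : C) (u : R), U (z, u) ->
           Cmod (z - fst (z0, u0))%C < e -> Rabs (u - snd (z0, u0)) < e ->
           I u /\ D (z * cexpi (lambda * u) - h u)%C /\
           f (z, u) = (F (z * cexpi (lambda * u) - h u) + A1 u * z + A0 u)%C).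
Proof.
  intros Hp.
  destruct (rdiffC_bound hh u0 _ (hh_deriv u0 I0_u0)) as [dh Hdh].
  set (M := Cmod (- ce u0)%C + 1).
  assert (HM : 1 <= M) by (unfold M; pose proof (Cmod_ge_0 (- ce u0)%C); lra).
  set (L := 16 * (Rabs lambda + 1) * (Cmod z0 + r0 + 1)).
  assert (HL : 16 <= L).
  { unfold L. pose proof (Rabs_pos lambda). pose proof (Cmod_ge_0 z0). pose proof (cond_pos r0).
    assert (1 <= (Rabs lambda + 1) * (Cmod z0 + r0 + 1)) by nra. lra. }
  pose proof (cond_pos r0) as Hr.
  set (e1 := Rmin (r0 / 4) (Rmin dh (Rmin (r0 / (16 * M)) (r0 / L)))).
  assert (He1p : 0 < e1).
  { unfold e1. repeat apply Rmin_pos; try apply cond_pos; apply Rdiv_lt_0_compat; lra. }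
  assert (E1a : e1 <= r0 / 4) by apply Rmin_l.
  assert (E1b : e1 <= dh) by (unfold e1; eapply Rle_trans; [apply Rmin_r|apply Rmin_l]).
  assert (E1c : e1 <= r0 / (16 * M)) by (unfold e1; eapply Rle_trans; [apply Rmin_r|]; eapply Rle_trans; [apply Rmin_r|apply Rmin_l]).
  assert (E1d : e1 <= r0 / L) by (unfold e1; eapply Rle_trans; [apply Rmin_r|]; eapply Rle_trans; [apply Rmin_r|apply Rmin_r]).
  assert (Hh8 : forall t, Rabs (t - u0) < e1 -> Cmod (hh t) < r0 / 8).
  { intros t Ht. specialize (Hdh (t - u0) ltac:(lra)). rewrite hh_u0 in Hdh.
    replace (u0 + (t - u0)) with t in Hdh by ring. fold M in Hdh.
    replace (hh t - RtoC 0)%C with (hh t) in Hdh by ring.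
    eapply Rle_lt_trans. apply Hdh.
    assert (M * Rabs (t - u0) < M * e1) by (apply Rmult_lt_compat_l; lra).
    assert (M * e1 <= r0 / 16).
    { apply Rmult_le_reg_l with (/ M). apply Rinv_0_lt_compat; lra.
      rewrite <- Rmult_assoc, Rinv_l, Rmult_1_l by lra. eapply Rle_trans. apply E1c. right. field. lra. }
    lra. }
  assert (He3 : 4 * Rabs lambda * (Cmod z0 + r0) * e1 <= r0 / 4).
  { assert (L * e1 <= r0).
    { apply Rmult_le_reg_l with (/ L). apply Rinv_0_lt_compat; lra.
      rewrite <- Rmult_assoc, Rinv_l, Rmult_1_l by lra. eapply Rle_trans. apply E1d. right. field. lra. }
    unfold L in H. pose proof (Rabs_pos lambda). pose proof (Cmod_ge_0 z0).
    assert (4 * Rabs lambda * (Cmod z0 + r0) * e1 <= 4 * (Rabs lambda + 1) * (Cmod z0 + r0 + 1) * e1).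
    { apply Rmult_le_compat_r. lra. apply Rmult_le_compat; nra. }
    lra. }
  pose proof (path_bound e1 He1p E1a He3 Hh8) as Hpath.
  set (I1 := fun t => Rabs (t - u0) < e1).
  assert (HI1 : open_R I1) by apply open_ball_R.
  assert (I1_I0 : forall t, I1 t -> I0 t) by (unfold I1, I0; intros; lra).
  assert (z0_e1 : Cmod (z0 - z0)%C < e1) by (replace (z0 - z0)%C with (RtoC 0) by ring; rewrite Cmod_0; lra).
  assert (HUz0 : forall t, I1 t -> U (z0, t)) by (intros; apply Hr0; [apply z0_in | apply I1_I0; auto]).
  assert (HDW : forall t, I1 t -> DD (Wf z0 t)).
  { intros t Ht. apply Wf_DD. apply (Hpath z0 t z0_e1 Ht). rewrite Rminus_eq_0, Rabs_R0. apply Rabs_pos. }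
  assert (Qh : forall n, Qn I1 n hh) by (intros; apply Qn_restrict with I0; auto; apply hh_Qn).
  assert (QW : forall n, Qn I1 n (Wf z0)).
  { intros n. apply Qn_ext with (fun t => z0 * cexpi (lambda * t) + (- RtoC 1) * hh t)%C; auto.
    intros; unfold Wf; ring.
    apply Qn_plus; auto. apply Qn_scal; auto. apply Qn_cexpi; auto. apply Qn_scal; auto. }
  assert (QG : forall n k, Qn I1 n (fun t => GG k (Wf z0 t))).
  { intros n k. apply Qn_holo with DD; auto. intros; apply GG_deriv; auto. }
  assert (QA1 : forall n, Qn I1 n A1).
  { intros n. apply Qn_ext with (fun t => g1 f (z0, t) + (- RtoC 1) * (GG 1 (Wf z0 t) * cexpi (lambda * t)))%C; auto.
    intros; unfold A1; ring.
    apply Qn_plus; auto. apply Qn_slice with U; auto. apply smooth_iterD; auto.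
    apply Qn_scal; auto. apply Qn_mult; auto. apply Qn_cexpi; auto. }
  assert (QA0 : forall n, Qn I1 n A0).
  { intros n. apply Qn_ext with (fun t => f (z0, t) + (- RtoC 1) * GG 0 (Wf z0 t) + (- z0) * A1 t)%C; auto.
    intros; unfold A0; ring.
    apply Qn_plus; auto. apply Qn_plus; auto. apply Qn_slice with U; auto.
    apply Qn_scal; auto. apply Qn_scal; auto. }
  exists (GG 0), DD, hh, A1, A0, I1, (mkposreal _ He1p).
  split. apply DD_open. split. apply F_diff. split. apply F_d3.
  split. auto. split. apply smooth_of_Qn; auto. split. apply smooth_of_Qn; auto. split. apply smooth_of_Qn; auto.
  intros z u HUzu Hz Hu. simpl in Hz, Hu.
  split. exact Hu.
  split. apply Wf_DD. apply Hpath; auto. rewrite Rminus_eq_0, Rabs_R0. apply Rabs_pos.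
  apply (K_rep u e1); auto; try lra.
Qed.

End Forward.

Section Converse.
Variable lambda : R.
Variable U : pt -> Prop.
Variable f : pt -> C.
Hypothesis HU : open_pt U.
Hypothesis Hs : smooth_on U f.
Hypothesis Hh : holo_in_zeta_on U f.
Hypothesis H2nz : forall p, U p -> Dz (Dz f) p <> RtoC 0.
Hypothesis H3nz : forall p, U p -> Dz (Dz (Dz f)) p <> RtoC 0.

Variable F : C -> C.
Variables h A1 A0 : R -> C.
Variable I : R -> Prop.
Hypothesis Hsh : smooth_R_on I h.
Variable z0 : C.
Variable u0 : R.
Variable rho : posreal.

Definition Wc (z : C) (u : R) : C := (z * cexpi (lambda * u) - h u)%C.

Hypothesis HB : forall z u, Cmod (z - z0)%C < rho -> Rabs (u - u0) < rho ->
  U (z, u) /\ I u /\ f (z, u) = (F (Wc z u) + A1 u * z + A0 u)%C.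

Lemma c2nz q : U q -> g2 f q <> RtoC 0.
Proof. intros Hq. rewrite <- (Dz2 U f HU Hs Hh q Hq). auto. Qed.
Lemma c3nz q : U q -> g3 f q <> RtoC 0.
Proof. intros Hq. rewrite <- (Dz3 U f HU Hs Hh q Hq). auto. Qed.

Section Slice.
Variables (z : C) (u : R).
Hypothesis Hz : Cmod (z - z0)%C < rho.
Hypothesis Hu : Rabs (u - u0) < rho.

Definition em := cexpi ((- lambda) * u).
Definition ep := cexpi (lambda * u).
Definition Zv (v : C) : C := ((v + h u) * em)%C.
Definition rr := rho - Cmod (z - z0)%C.
Definition NN (v : C) : Prop := Cmod (v - Wc z u)%C < rr.

Lemma epem : (ep * em)%C = RtoC 1.
Proof. unfold ep, em. rewrite cexpi_add. replace (lambda * u + - lambda * u) with 0 by ring. apply cexpi_0. Qed.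

Lemma Zv_W : Zv (Wc z u) = z.
Proof. unfold Zv, Wc. replace (z * cexpi (lambda * u) - h u + h u)%C with (z * ep)%C by (unfold ep; ring).
  rewrite <- Cmult_assoc, epem. ring. Qed.

Lemma NN_box v : NN v -> Cmod (Zv v - z0)%C < rho.
Proof.
  intros Hv. unfold NN, rr in Hv.
  replace (Zv v - z0)%C with ((v - Wc z u) * em + (Zv (Wc z u) - z0))%C by (unfold Zv; ring).
  rewrite Zv_W. eapply Rle_lt_trans. apply Cmod_triangle. rewrite Cmod_mult. unfold em. rewrite Cmod_cexpi. lra.
Qed.

Lemma W_Zv v : Wc (Zv v) u = v.
Proof.
  unfold Wc, Zv. replace ((v + h u) * em * cexpi (lambda * u))%C with ((v + h u) * (ep * em))%C by (unfold ep; ring).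
  rewrite epem. ring.
Qed.

Lemma NN_open : forall v, NN v -> exists r : posreal, forall w, Cmod (w - v)%C < r -> NN w.
Proof.
  intros v Hv. unfold NN in *. assert (P : 0 < rr - Cmod (v - Wc z u)%C) by lra.
  exists (mkposreal _ P). simpl. intros w Hw.
  replace (w - Wc z u)%C with ((w - v) + (v - Wc z u))%C by ring.
  eapply Rle_lt_trans. apply Cmod_triangle. lra.
Qed.

Lemma NN_W : NN (Wc z u).
Proof. unfold NN, rr. replace (Wc z u - Wc z u)%C with (RtoC 0) by ring. rewrite Cmod_0. lra. Qed.

Lemma F_loc v : NN v -> F v = (f (Zv v, u) - A1 u * Zv v - A0 u)%C.
Proof.
  intros Hv. destruct (HB (Zv v) u (NN_box v Hv) Hu) as [_ [_ E]]. rewrite W_Zv in E. rewrite E. ring.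
Qed.

Lemma Zv_cdiff v : cdiff Zv v em.
Proof.
  unfold Zv. pose proof (cdiff_mult _ _ _ _ _ (cdiff_plus _ _ _ _ _ (cdiff_id v) (cdiff_const (h u) v)) (cdiff_const em v)) as K.
  cbv beta in K. assert (E : ((RtoC 1 + RtoC 0) * em + (v + h u) * RtoC 0)%C = em) by ring. rewrite E in K. exact K.
Qed.

Lemma UZ v : NN v -> U (Zv v, u).
Proof. intros Hv. apply (HB (Zv v) u (NN_box v Hv) Hu). Qed.

Lemma Fk_cdiff vs v : NN v -> cdiff (fun w => iterD vs f (Zv w, u)) v (iterD (vx :: vs) f (Zv v, u) * em)%C.
Proof.
  intros Hv. pose proof (H_iter U f HU Hs Hh vs (Zv v, u) (UZ v Hv)) as H. simpl in H.
  pose proof (cdiff_comp (fun w => iterD vs f (w, u)) Zv v _ _ (Zv_cdiff v) H) as K. exact K.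
Qed.

Lemma CdF1 v : NN v -> C_derive F v = ((g1 f (Zv v, u) - A1 u) * em)%C.
Proof.
  intros Hv. apply cdiff_C_derive.
  apply cdiff_ext_loc with (F := fun w => (f (Zv w, u) - A1 u * Zv w - A0 u)%C).
  destruct (NN_open v Hv) as [r Hr]. exists r. intros w Hw. symmetry. apply F_loc. apply Hr; auto.
  pose proof (cdiff_minus _ _ _ _ _ (cdiff_minus _ _ _ _ _ (Fk_cdiff nil v Hv) (cdiff_scal (A1 u) _ _ _ (Zv_cdiff v))) (cdiff_const (A0 u) v)) as K.
  cbv beta in K. simpl in K.
  replace ((g1 f (Zv v, u) - A1 u) * em)%C with (dirD vx f (Zv v, u) * em - A1 u * em - RtoC 0)%C. exact K.
  unfold g1; simpl. ring.
Qed.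

Lemma CdF2 v : NN v -> C_derive (C_derive F) v = (g2 f (Zv v, u) * (em * em))%C.
Proof.
  intros Hv. apply cdiff_C_derive.
  apply cdiff_ext_loc with (F := fun w => ((g1 f (Zv w, u) - A1 u) * em)%C).
  destruct (NN_open v Hv) as [r Hr]. exists r. intros w Hw. symmetry. apply CdF1. apply Hr; auto.
  pose proof (cdiff_mult _ _ _ _ _ (cdiff_minus _ _ _ _ _ (Fk_cdiff (vx :: nil) v Hv) (cdiff_const (A1 u) v)) (cdiff_const em v)) as K.
  cbv beta in K. unfold g1, g2. simpl in *.
  replace (dirD vx (dirD vx f) (Zv v, u) * (em * em))%C with
    ((dirD vx (dirD vx f) (Zv v, u) * em - RtoC 0) * em + (dirD vx f (Zv v, u) - A1 u) * RtoC 0)%C by ring.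
  exact K.
Qed.

Lemma F2_cdiff : cdiff (C_derive (C_derive F)) (Wc z u) (g3 f (z, u) * (em * em * em))%C.
Proof.
  apply cdiff_ext_loc with (F := fun w => (g2 f (Zv w, u) * (em * em))%C).
  destruct (NN_open _ NN_W) as [r Hr]. exists r. intros w Hw. symmetry. apply CdF2. apply Hr; auto.
  pose proof (cdiff_mult _ _ _ _ _ (Fk_cdiff (vx :: vx :: nil) _ NN_W) (cdiff_const (em * em)%C (Wc z u))) as K.
  cbv beta in K. rewrite Zv_W in K. unfold g2, g3. simpl in *.
  replace (dirD vx (dirD vx (dirD vx f)) (z, u) * (em * em * em))%C with
    (dirD vx (dirD vx (dirD vx f)) (z, u) * em * (em * em) + dirD vx (dirD vx f) (z, u) * RtoC 0)%C by ring.
  exact K.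
Qed.

Lemma F2_val : C_derive (C_derive F) (Wc z u) = (g2 f (z, u) * (em * em))%C.
Proof. rewrite CdF2. rewrite Zv_W. auto. apply NN_W. Qed.

End Slice.

Lemma h_isdC u : I u -> isdC h u (derC h u).
Proof. intros Hu. apply isdC_of_ex; apply (Hsh 0%nat u Hu). Qed.

Lemma KI z u : Cmod (z - z0)%C < rho -> Rabs (u - u0) < rho ->
  (g2u f (z, u) - RtoC 2 * (Ci * RtoC lambda) * g2 f (z, u) =
   (Ci * RtoC lambda * z - derC h u * cexpi ((- lambda) * u)) * g3 f (z, u))%C.
Proof.
  intros Hz Hu. destruct (HB z u Hz Hu) as [HUzu [HIu _]].
  assert (Hloc' : forall s : R, Rabs (s - u0) < rho ->
     g2 f (z, s) = (cexpi (lambda * s) * cexpi (lambda * s) * C_derive (C_derive F) (Wc z s))%C).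
  { intros s Hs3.
    rewrite (F2_val z s Hz Hs3). unfold em.
    assert (Hp : (cexpi (lambda * s) * cexpi (- lambda * s))%C = RtoC 1)
      by (rewrite cexpi_add; replace (lambda * s + - lambda * s) with 0 by ring; apply cexpi_0).
    transitivity ((cexpi (lambda * s) * cexpi (- lambda * s)) * (cexpi (lambda * s) * cexpi (- lambda * s)) * g2 f (z, s))%C.
    rewrite Hp. ring. ring. }
  assert (Hloc : locally u (fun s => g2 f (z, s) = (cexpi (lambda * s) * cexpi (lambda * s) * C_derive (C_derive F) (Wc z s))%C)).
  { assert (P : 0 < rho - Rabs (u - u0)) by lra.
    exists (mkposreal _ P). intros s Hs2. unfold ball in Hs2; simpl in Hs2.
    unfold AbsRing_ball, abs, minus, plus, opp in Hs2; simpl in Hs2.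
    apply Hloc'.
    replace (s - u0) with ((s + - u) + (u - u0)) by ring. eapply Rle_lt_trans. apply Rabs_triang. lra. }
  assert (HW : isdC (Wc z) u (z * (Ci * RtoC lambda * cexpi (lambda * u)) - derC h u)%C).
  { unfold Wc. apply isdC_minus. 
    pose proof (isdC_scal z _ _ _ (isdC_cexpi lambda u)) as K. exact K. apply h_isdC; auto. }
  pose proof (MIX (C_derive (C_derive F)) (Wc z) u _ _ (F2_cdiff z u Hz Hu) HW) as HM.
  pose proof (isdC_mult _ _ u _ _ (isdC_mult _ _ u _ _ (isdC_cexpi lambda u) (isdC_cexpi lambda u)) HM) as HM2.
  cbv beta in HM2.
  apply (isdC_ext_loc _ (fun s => g2 f (z, s))) in HM2.
  2: { eapply filter_imp. 2: exact Hloc. intros s Hs2. simpl. auto. }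
  pose proof (slice_u (g2 f) z u (proj2 (Hs (vx :: vx :: nil)) vu (z, u) HUzu)) as HS.
  pose proof (isdC_derC _ _ _ HM2) as D1. pose proof (isdC_derC _ _ _ HS) as D2.
  pose proof (eq_trans (eq_sym D1) D2) as D3. change (dirD vu (g2 f) (z, u)) with (g2u f (z, u)) in D3.
  rewrite <- D3. rewrite (F2_val z u Hz Hu). unfold em.
  set (ep0 := cexpi (lambda * u)). set (em0 := cexpi (- lambda * u)).
  assert (Hpm : (ep0 * em0)%C = RtoC 1) by (unfold ep0, em0; rewrite cexpi_add; replace (lambda * u + - lambda * u) with 0 by ring; apply cexpi_0).
  set (G2 := g2 f (z, u)). set (G3 := g3 f (z, u)). set (dh := derC h u).
  assert (Hnz : ep0 <> RtoC 0) by apply cexpi_nz.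
  assert (Hem : em0 = (/ ep0)%C).
  { transitivity ((ep0 * em0) / ep0)%C. field. auto. rewrite Hpm. field. auto. }
  unfold em. fold em0.
  rewrite Hem. field. auto.
Qed.



Lemma conv_eq : Dz (fun q => (psi_of f q / phi_of f q)%C) (z0, u0) =
      (Ci * RtoC lambda * (Dz (fun q => (RtoC 2 / phi_of f q)%C) (z0, u0) + RtoC 1))%C.
Proof.
  assert (Hz0 : Cmod (z0 - z0)%C < rho) by (replace (z0 - z0)%C with (RtoC 0) by ring; rewrite Cmod_0; apply cond_pos).
  assert (Hu0 : Rabs (u0 - u0) < rho) by (rewrite Rminus_eq_0, Rabs_R0; apply cond_pos).
  assert (HUp : U (z0, u0)) by apply (HB z0 u0 Hz0 Hu0).
  assert (HUw : forall w, Cmod (w - z0)%C < rho -> U (w, u0)) by (intros w Hw; apply (HB w u0 Hw Hu0)).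
  pose proof (H_iter U f HU Hs Hh (vx :: vx :: nil) (z0, u0) HUp) as Hg2. simpl in Hg2.
  pose proof (H_iter U f HU Hs Hh (vx :: vx :: vx :: nil) (z0, u0) HUp) as Hg3. simpl in Hg3.
  pose proof (c3nz (z0, u0) HUp) as N3. unfold g3 in N3. simpl in N3.
  pose proof (cdiff_div _ _ _ _ _ Hg2 Hg3 N3) as HQ. cbv beta in HQ.
  set (Qd := ((dirD vx (dirD vx (dirD vx f)) (z0, u0) * dirD vx (dirD vx (dirD vx f)) (z0, u0) -
         dirD vx (dirD vx f) (z0, u0) * dirD vx (dirD vx (dirD vx (dirD vx f))) (z0, u0)) /
        (dirD vx (dirD vx (dirD vx f)) (z0, u0) * dirD vx (dirD vx (dirD vx f)) (z0, u0)))%C) in HQ.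
  set (cl0 := (Ci * RtoC lambda)%C).
  set (c0 := (derC h u0 * cexpi (- lambda * u0))%C).
  assert (L2 : Dz (fun q => (RtoC 2 / phi_of f q)%C) (z0, u0) = (RtoC 2 * Qd)%C).
  { unfold Dz. simpl. apply cdiff_C_derive.
    apply cdiff_ext_loc with (F := fun w => (RtoC 2 * (dirD vx (dirD vx f) (w, u0) / dirD vx (dirD vx (dirD vx f)) (w, u0)))%C).
    exists rho. intros w Hw. specialize (HUw w Hw).
    rewrite (phi_eq U f HU Hs Hh _ HUw). pose proof (c2nz _ HUw). pose proof (c3nz _ HUw).
    unfold g2, g3 in *. simpl in *. field. auto.
    apply cdiff_scal. exact HQ. }
  assert (L1 : Dz (fun q => (psi_of f q / phi_of f q)%C) (z0, u0) = (RtoC 2 * cl0 * Qd + cl0 * RtoC 1 - RtoC 0)%C).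
  { unfold Dz. simpl. apply cdiff_C_derive.
    apply cdiff_ext_loc with (F := fun w => (RtoC 2 * cl0 * (dirD vx (dirD vx f) (w, u0) / dirD vx (dirD vx (dirD vx f)) (w, u0)) + cl0 * w - c0)%C).
    exists rho. intros w Hw. pose proof (HUw w Hw) as HU'.
    rewrite (phi_eq U f HU Hs Hh _ HU'), (psi_eq U f HU Hs Hh _ HU').
    pose proof (KI w u0 Hw Hu0) as K.
    pose proof (c2nz _ HU'). pose proof (c3nz _ HU').
    assert (Hg2u : g2u f (w, u0) = (RtoC 2 * cl0 * g2 f (w, u0) + (cl0 * w - c0) * g3 f (w, u0))%C).
    { unfold cl0, c0. rewrite <- K. ring. }
    rewrite Hg2u. unfold g2, g3 in *. simpl in *. field. auto.
    apply cdiff_minus. apply cdiff_plus. apply cdiff_scal. exact HQ. apply cdiff_scal. apply cdiff_id. apply cdiff_const. }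
  rewrite L1, L2. unfold cl0. ring.
Qed.

End Converse.

Theorem mainTheorem6 (lambda : R) (U : pt -> Prop) (f : pt -> C) :
  open_pt U -> connected_pt U ->
  smooth_on U f -> holo_in_zeta_on U f ->
  (forall p, U p -> Dz (Dz f) p <> RtoC 0) ->
  (forall p, U p -> Dz (Dz (Dz f)) p <> RtoC 0) ->
  ((forall p, U p ->
      Dz (fun q => (psi_of f q / phi_of f q)%C) p =
      (Ci * RtoC lambda * (Dz (fun q => (RtoC 2 / phi_of f q)%C) p + RtoC 1))%C)
   <->
   (forall p, U p ->
      exists (F : C -> C) (D : C -> Prop) (h A1 A0 : R -> C) (I : R -> Prop) (e : posreal),
        open_C D /\ (forall w, D w -> C_diff F w) /\
        (forall w, D w -> C_derive (C_derive (C_derive F)) w <> RtoC 0) /\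
        open_R I /\ smooth_R_on I h /\ smooth_R_on I A1 /\ smooth_R_on I A0 /\
        (forall (z : C) (u : R), U (z, u) ->
           Cmod (z - fst p)%C < e -> Rabs (u - snd p) < e ->
           I u /\ D (z * cexpi (lambda * u) - h u)%C /\
           f (z, u) = (F (z * cexpi (lambda * u) - h u) + A1 u * z + A0 u)%C))).
Proof.
  intros HU _ Hs Hh H2 H3. split.
  - intros Heq p Hp. destruct (HU p Hp) as [r0 Hr0]. destruct p as [z0 u0].
    exact (forward_at lambda U f HU Hs Hh H2 H3 Heq z0 u0 r0 Hr0 Hp).
  - intros Hrep p Hp.
    destruct (Hrep p Hp) as (F & D & h & A1 & A0 & I & e & HD & HF & HF3 & HI & Hsh & HA1 & HA0 & Hrel).
    destruct (HU p Hp) as [r Hr]. destruct p as [z0 u0]. simpl in *.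
    assert (Hz0 : Cmod (z0 - z0)%C < e) by (replace (z0 - z0)%C with (RtoC 0) by ring; rewrite Cmod_0; apply cond_pos).
    assert (Hu0 : Rabs (u0 - u0) < e) by (rewrite Rminus_eq_0, Rabs_R0; apply cond_pos).
    destruct (Hrel z0 u0 Hp Hz0 Hu0) as [HIu0 _].
    destruct (HI u0 HIu0) as [dI HdI].
    set (rho := Rmin e (Rmin r dI)).
    assert (Prho : 0 < rho) by (unfold rho; repeat apply Rmin_pos; apply cond_pos).
    assert (R1 : rho <= e) by apply Rmin_l.
    assert (R2 : rho <= r) by (unfold rho; eapply Rle_trans; [apply Rmin_r|apply Rmin_l]).
    assert (R3 : rho <= dI) by (unfold rho; eapply Rle_trans; [apply Rmin_r|apply Rmin_r]).
    apply (conv_eq lambda U f HU Hs Hh H2 H3 F h A1 A0 I Hsh z0 u0 (mkposreal _ Prho)).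
    simpl. intros z u Hz Hu.
    assert (HUzu : U (z, u)) by (apply Hr; lra).
    destruct (Hrel z u HUzu ltac:(lra) ltac:(lra)) as [HIu [_ Hf]].
    split; auto.
Qed.
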